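(* Let $\bar t>0$, $I=(0,\bar t)$, let $\gamma_1,\gamma_2\in\mathrm{Lip}(I)$ (extended continuously to $\bar I$) with $\gamma_1<0<\gamma_2$ on $I$, $\gamma_1(0)=\gamma_1(\bar t)=\gamma_2(0)=\gamma_2(\bar t)=0$, $\gamma_1$ convex and $\gamma_2$ concave, and let $D=\{(y,t)\in\mathbb W: t\in I,\ \gamma_1(t)<y<\gamma_2(t)\}$. Let $\phi:\partial D\to\mathbb R$ be continuous with $\phi_1,\phi_2\in\mathrm{Lip}(I)$, and assume $$\zeta<\frac{\sqrt{129}-11}{4}.$$ Then there exists $u:\bar D\to\mathbb R$ such that: (i) $R_\phi=S_u=\{(u(y,t),y,t+2yu(y,t)):(y,t)\in D\}$; (ii) $u$ is Lipschitz continuous on $\bar D$; (iii) $u=\phi$ on $\partial D$.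
   Context: $\mathbb H$ is $\mathbb R^3$ with product $(x,y,t)\cdot(\xi,\eta,\tau)=(x+\xi,y+\eta,t+\tau+2(y\xi-x\eta))$; $X=\partial_x+2y\partial_t$, $Y=\partial_y-2x\partial_t$, $H_p=\mathrm{span}\{X(p),Y(p)\}$. $\mathbb W=\{x=0\}$ with coordinates $(y,t)$. Set $\phi_i(s)=\phi(\gamma_i(s),s)$, $\|\gamma\|_\infty=\max_i\|\gamma_i\|_\infty$, $\mathrm{Lip}(\gamma)=\max_i\mathrm{Lip}(\gamma_i)$, $\|\phi\|_\infty=\max_i\|\phi_i\|_\infty$, $\mathrm{Lip}(\phi)=\max_i\mathrm{Lip}(\phi_i)$, $\zeta=4(\|\gamma\|_\infty+\mathrm{Lip}(\gamma))(\|\phi\|_\infty+\mathrm{Lip}(\phi))$, $p_i(s)=(\phi_i(s),\gamma_i(s),s+2\gamma_i(s)\phi_i(s))$. For $\zeta<1$, $\lambda(s)$ denotes the unique point of $\bar I$ with $p_2(\lambda(s))-p_1(s)\in H_{p_1(s)}$ (equivalently $\lambda(s)-s+2(\gamma_2(\lambda(s))-\gamma_1(s))(\phi_2(\lambda(s))+\phi_1(s))=0$); $\lambda$ is increasing and bi-Lipschitz with $\lambda(0)=0$, $\lambda(\bar t)=\bar t$. Define $\rho(h,s)=(1-h)p_1(s)+h\,p_2(\lambda(s))$ for $(h,s)\in Q=(0,1)\times I$ and $R_\phi=\rho(Q)$. *)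

(* Defs.v *)
From Stdlib Require Import Reals Lra.
From Coquelicot Require Import Coquelicot.
Open Scope R_scope.

(* Points of the Heisenberg group H = R^3, written (x, y, t). *)
Definition pt3 := (R * R * R)%type.

Definition vadd (p q : pt3) : pt3 :=
  let '(x, y, t) := p in let '(a, b, c) := q in (x + a, y + b, t + c).
Definition vsub (p q : pt3) : pt3 :=
  let '(x, y, t) := p in let '(a, b, c) := q in (x - a, y - b, t - c).
Definition vscale (k : R) (p : pt3) : pt3 :=
  let '(x, y, t) := p in (k * x, k * y, k * t).

(* Left-invariant vector fields X = d_x + 2y d_t, Y = d_y - 2x d_t at p. *)
Definition Xf (p : pt3) : pt3 := let '(x, y, t) := p in (1, 0, 2 * y).
Definition Yf (p : pt3) : pt3 := let '(x, y, t) := p in (0, 1, -2 * x).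
Definition in_horizontal (p v : pt3) : Prop :=
  exists a b : R, v = vadd (vscale a (Xf p)) (vscale b (Yf p)).

Definition Iopen (tb t : R) : Prop := 0 < t < tb.
Definition Iclosed (tb t : R) : Prop := 0 <= t <= tb.

Definition lip_on (P : R -> Prop) (f : R -> R) : Prop :=
  exists L : R, forall s t, P s -> P t -> Rabs (f s - f t) <= L * Rabs (s - t).
Definition cont_on (P : R -> Prop) (f : R -> R) : Prop :=
  forall t, P t -> forall eps, 0 < eps -> exists delta, 0 < delta /\
    forall s, P s -> Rabs (s - t) < delta -> Rabs (f s - f t) < eps.
Definition convex_on (P : R -> Prop) (f : R -> R) : Prop :=
  forall a b th, P a -> P b -> 0 <= th <= 1 ->
    f (th * a + (1 - th) * b) <= th * f a + (1 - th) * f b.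
Definition concave_on (P : R -> Prop) (f : R -> R) : Prop :=
  forall a b th, P a -> P b -> 0 <= th <= 1 ->
    th * f a + (1 - th) * f b <= f (th * a + (1 - th) * b).

(* The plane W = {x = 0} with coordinates (y, t); Euclidean distance. *)
Definition distW (y t y' t' : R) : R := sqrt ((y - y') ^ 2 + (t - t') ^ 2).
Definition closureW (S : R -> R -> Prop) (y t : R) : Prop :=
  forall eps, 0 < eps -> exists y' t', S y' t' /\ distW y t y' t' < eps.
Definition bdryW (S : R -> R -> Prop) (y t : R) : Prop :=
  closureW S y t /\ closureW (fun y' t' => ~ S y' t') y t.

Definition domD (tb : R) (g1 g2 : R -> R) (y t : R) : Prop :=
  Iopen tb t /\ g1 t < y < g2 t.

Definition phi_i (phi : R -> R -> R) (g : R -> R) (s : R) : R := phi (g s) s.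

Definition supI (tb : R) (f : R -> R) : R :=
  real (Lub_Rbar (fun r => exists t, Iopen tb t /\ r = Rabs (f t))).
Definition lipI (tb : R) (f : R -> R) : R :=
  real (Lub_Rbar (fun r => exists s t, Iopen tb s /\ Iopen tb t /\ s <> t /\
                     r = Rabs (f s - f t) / Rabs (s - t))).

Definition zeta (tb : R) (g1 g2 : R -> R) (phi : R -> R -> R) : R :=
  4 * (Rmax (supI tb g1) (supI tb g2) + Rmax (lipI tb g1) (lipI tb g2))
    * (Rmax (supI tb (phi_i phi g1)) (supI tb (phi_i phi g2))
       + Rmax (lipI tb (phi_i phi g1)) (lipI tb (phi_i phi g2))).

Definition p_i (phi : R -> R -> R) (g : R -> R) (s : R) : pt3 :=
  (phi_i phi g s, g s, s + 2 * g s * phi_i phi g s).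

(* R_phi = { (1-h) p1(s) + h p2(lambda(s)) : h in (0,1), s in I }, where
   lambda(s) is the (unique, when zeta < 1) point l of [0,tb] with
   p2(l) - p1(s) in H_{p1(s)}. *)
Definition R_phi (tb : R) (g1 g2 : R -> R) (phi : R -> R -> R) (p : pt3) : Prop :=
  exists h s l, 0 < h < 1 /\ Iopen tb s /\ Iclosed tb l /\
    in_horizontal (p_i phi g1 s) (vsub (p_i phi g2 l) (p_i phi g1 s)) /\
    p = vadd (vscale (1 - h) (p_i phi g1 s)) (vscale h (p_i phi g2 l)).

Definition S_u (tb : R) (g1 g2 : R -> R) (u : R -> R -> R) (p : pt3) : Prop :=
  exists y t, domD tb g1 g2 y t /\ p = (u y t, y, t + 2 * y * u y t).

(* Main.v *)
Require Import Defs.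
From Stdlib Require Import Reals.
From Coquelicot Require Import Coquelicot.
From Stdlib Require Import Lra Psatz ClassicalEpsilon.
Open Scope R_scope.

Definition clamp (a b x : R) := Rmax a (Rmin b x).

Lemma clamp_lip a b x y : a <= b -> Rabs (clamp a b x - clamp a b y) <= Rabs (x - y).
Proof. intros. unfold clamp, Rmax, Rmin. repeat destruct Rle_dec; split_Rabs; lra. Qed.

Lemma clamp_in a b x : a <= b -> a <= clamp a b x <= b.
Proof. intros. unfold clamp, Rmax, Rmin. repeat destruct Rle_dec; lra. Qed.

Lemma clamp_id a b x : a <= x <= b -> clamp a b x = x.
Proof. intros. unfold clamp, Rmax, Rmin. repeat destruct Rle_dec; lra. Qed.

Lemma lip_cont (g : R -> R) K : 0 <= K -> (forall x y, Rabs (g x - g y) <= K * Rabs (x - y)) ->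
  continuity g.
Proof.
  intros HK Hg x. unfold continuity_pt, continue_in, limit1_in, limit_in.
  intros eps Heps. exists (eps / (K + 1)). split.
  { apply Rdiv_lt_0_compat; lra. }
  intros y [_ Hy]. simpl in *. unfold R_dist in *.
  eapply Rle_lt_trans. apply Hg.
  apply Rle_lt_trans with (K * (eps / (K+1))).
  apply Rmult_le_compat_l; lra.
  apply Rlt_le_trans with ((K+1) * (eps / (K+1))).
  apply Rmult_lt_compat_r. apply Rdiv_lt_0_compat; lra. lra.
  right. field. lra.
Qed.

Lemma lip_ivt (f : R -> R) a b K c : a <= b -> 0 <= K ->
  (forall x y, a <= x <= b -> a <= y <= b -> Rabs (f x - f y) <= K * Rabs (x - y)) ->
  f a <= c <= f b -> exists x, a <= x <= b /\ f x = c.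
Proof.
  intros Hab HK Hf Hc.
  destruct (Req_dec (f a) c) as [E|E]. { exists a. split; [lra|auto]. }
  destruct (Req_dec (f b) c) as [E'|E']. { exists b. split; [lra|auto]. }
  destruct (Req_dec a b) as [Eab|Eab]. { subst. lra. }
  set (g := fun x => f (clamp a b x) - c).
  assert (Hg : continuity g).
  { apply lip_cont with K; auto. intros x y. unfold g.
    replace (f (clamp a b x) - c - (f (clamp a b y) - c)) with (f (clamp a b x) - f (clamp a b y)) by ring.
    eapply Rle_trans. apply Hf; apply clamp_in; lra.
    apply Rmult_le_compat_l; auto. apply clamp_lip; lra. }
  destruct (IVT g a b Hg) as [z [Hz1 Hz2]]; try lra.
  - unfold g. rewrite clamp_id; lra.
  - unfold g. rewrite clamp_id; lra.
  - exists z. split; auto. unfold g in Hz2. rewrite clamp_id in Hz2; lra.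
Qed.

Lemma le_eps x y K : 0 <= K -> (forall e, 0 < e -> x <= y + K * e) -> x <= y.
Proof.
  intros HK H. destruct (Rle_dec x y) as [h|h]; auto.
  exfalso. set (e := (x - y) / (2 * (K + 1))).
  assert (He : 0 < e). { unfold e. apply Rdiv_lt_0_compat; lra. }
  specialize (H e He).
  assert (E1 : (K + 1) * e = (x - y) / 2) by (unfold e; field; lra).
  assert (K * e <= (K+1) * e) by (apply Rmult_le_compat_r; lra).
  lra.
Qed.

Lemma prod_bound a b A B : Rabs a <= A -> Rabs b <= B -> Rabs (a * b) <= A * B.
Proof. intros. rewrite Rabs_mult. apply Rmult_le_compat; auto using Rabs_pos. Qed.

Lemma abs_le_inv a b : Rabs a <= b -> - b <= a <= b.
Proof. split_Rabs; lra. Qed.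

Lemma abs_sub a b : Rabs (a - b) <= Rabs a + Rabs b.
Proof. split_Rabs; lra. Qed.

Lemma tri3 a b c d : Rabs (a - d) <= Rabs (a - b) + Rabs (b - c) + Rabs (c - d).
Proof. split_Rabs; lra. Qed.

Lemma div_le N D K : 0 < D -> Rabs N <= K * D -> Rabs (N / D) <= K.
Proof.
  intros HD H. unfold Rdiv. rewrite Rabs_mult, Rabs_inv, (Rabs_right D) by lra.
  apply Rmult_le_reg_r with D; auto. rewrite Rmult_assoc, Rinv_l by lra. lra.
Qed.

Definition fH a b := a * b / (a + b).
Definition ff a b P Q := a * (P + Q) + (P - Q) * fH a b.

Lemma fH_bounds a b : 0 <= a -> 0 <= b -> 0 < a + b -> 0 <= fH a b <= a /\ fH a b <= b.
Proof.
  intros Ha Hb Hab. unfold fH.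
  assert (h1 : 0 <= b / (a + b) <= 1).
  { split. apply Rmult_le_pos; auto. left; apply Rinv_0_lt_compat; auto.
    apply Rmult_le_reg_r with (a+b); auto. unfold Rdiv. rewrite Rmult_assoc, Rinv_l by lra. lra. }
  assert (h2 : 0 <= a / (a + b) <= 1).
  { split. apply Rmult_le_pos; auto. left; apply Rinv_0_lt_compat; auto.
    apply Rmult_le_reg_r with (a+b); auto. unfold Rdiv. rewrite Rmult_assoc, Rinv_l by lra. lra. }
  replace (a * b / (a + b)) with (a * (b / (a + b))) by (field; lra).
  split; [split|]. nra. nra.
  replace (a * (b / (a + b))) with (b * (a / (a + b))) by (field; lra). nra.
Qed.

Lemma fH_diff a b a' b' : 0 <= a -> 0 <= b -> 0 <= a' -> 0 <= b' -> 0 < a + b -> 0 < a' + b' ->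
  Rabs (fH a' b' - fH a b) <= Rabs (a' - a) + Rabs (b' - b).
Proof.
  intros. unfold fH.
  replace (a' * b' / (a' + b') - a * b / (a + b)) with
    ((a * a' * (b' - b) + b * b' * (a' - a)) / ((a + b) * (a' + b'))) by (field; lra).
  apply div_le. nra.
  eapply Rle_trans. apply Rabs_triang.
  rewrite !Rabs_mult, (Rabs_right a), (Rabs_right a'), (Rabs_right b), (Rabs_right b') by lra.
  generalize (Rabs_pos (b' - b)) (Rabs_pos (a' - a)). intros.
  assert (a * a' <= (a + b) * (a' + b')) by nra.
  assert (b * b' <= (a + b) * (a' + b')) by nra.
  nra.
Qed.

Lemma ff_diff a b a' b' P Q P' Q' M G : 0 <= a -> 0 <= b -> 0 <= a' -> 0 <= b' -> 0 < a + b -> 0 < a' + b' ->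
  Rabs P' <= M -> Rabs Q' <= M -> a + b <= 2 * G ->
  Rabs (ff a' b' P' Q' - ff a b P Q) <= 2 * M * (Rabs (a' - a) + Rabs (b' - b)) + 2 * G * (Rabs (P' - P) + Rabs (Q' - Q)).
Proof.
  intros Ha Hb Ha' Hb' Hab Hab' HP HQ HG. unfold ff.
  destruct (fH_bounds a b Ha Hb Hab) as [[h0 h1] h2].
  generalize (fH_diff a b a' b' Ha Hb Ha' Hb' Hab Hab'). intros hd.
  set (H := fH a b) in *. clearbody H. set (H' := fH a' b') in *.
  replace (a' * (P' + Q') + (P' - Q') * H' - (a * (P + Q) + (P - Q) * H)) with
    (((a' - a) * (P' + Q') + (P' - Q') * (H' - H)) + ((a + H) * (P' - P) + (a - H) * (Q' - Q))) by ring.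
  eapply Rle_trans. apply Rabs_triang. apply Rplus_le_compat.
  - eapply Rle_trans. apply Rabs_triang. rewrite !Rabs_mult.
    assert (Rabs (P' + Q') + Rabs (P' - Q') <= 2 * M) by (revert HP HQ; split_Rabs; lra).
    generalize (Rabs_pos (a' - a)) (Rabs_pos (b' - b)) (Rabs_pos (P' + Q')) (Rabs_pos (P' - Q')) (Rabs_pos (H' - H)).
    intros. nra.
  - eapply Rle_trans. apply Rabs_triang. rewrite !Rabs_mult, (Rabs_right (a + H)), (Rabs_right (a - H)) by lra.
    generalize (Rabs_pos (P' - P)) (Rabs_pos (Q' - Q)). intros. nra.
Qed.

Lemma ff_small a b P Q M : 0 <= a -> 0 <= b -> 0 < a + b -> Rabs P <= M -> Rabs Q <= M ->
  Rabs (ff a b P Q) <= 4 * M * a /\ Rabs (ff a b P Q - (a + b) * (P + Q)) <= 4 * M * b.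
Proof.
  intros Ha Hb Hab HP HQ. unfold ff.
  destruct (fH_bounds a b Ha Hb Hab) as [[h0 h1] h2]. set (H := fH a b) in *. clearbody H.
  assert (hS : Rabs (P + Q) <= 2 * M) by (revert HP HQ; split_Rabs; lra).
  assert (hD : Rabs (P - Q) <= 2 * M) by (revert HP HQ; split_Rabs; lra).
  split.
  - eapply Rle_trans. apply Rabs_triang. rewrite !Rabs_mult, (Rabs_right a), (Rabs_right H) by lra.
    generalize (Rmult_le_compat_l a _ _ Ha hS) (Rmult_le_compat_l H _ _ h0 hD) (Rabs_pos P). intros. nra.
  - replace (a * (P + Q) + (P - Q) * H - (a + b) * (P + Q)) with ((P - Q) * H - b * (P + Q)) by ring.
    eapply Rle_trans. apply abs_sub. rewrite !Rabs_mult, (Rabs_right b), (Rabs_right H) by lra.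
    generalize (Rmult_le_compat_l b _ _ Hb hS) (Rmult_le_compat_l H _ _ h0 hD) (Rabs_pos P). intros. nra.
Qed.

Lemma U_alg P P' D D' a a' d d' K : 0 < d -> 0 < d' -> 0 <= a <= d -> 0 <= a' <= d' -> Rabs D' <= K * d' ->
  Rabs ((P' - a' * D' / d') - (P - a * D / d)) <=
  Rabs (P' - P) + Rabs (D' - D) + K * (Rabs (a' - a) + Rabs ((d' - a') - (d - a))).
Proof.
  intros Hd Hd' Ha Ha' HD.
  replace ((P' - a' * D' / d') - (P - a * D / d)) with
    ((P' - P) - ((D' - D) * (a / d)) - ((D' / d') * ((a' * (d - a) - a * (d' - a')) / d))) by (field; lra).
  assert (h1 : Rabs (a / d) <= 1) by (apply div_le; auto; rewrite Rabs_right; lra).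
  assert (h2 : Rabs (D' / d') <= K) by (apply div_le; auto).
  assert (h3 : Rabs ((a' * (d - a) - a * (d' - a')) / d) <= Rabs (a' - a) + Rabs ((d' - a') - (d - a))).
  { apply div_le; auto.
    replace (a' * (d - a) - a * (d' - a')) with ((a' - a) * (d - a) - a * ((d' - a') - (d - a))) by ring.
    eapply Rle_trans. apply abs_sub. rewrite !Rabs_mult, (Rabs_right (d - a)), (Rabs_right a) by lra.
    generalize (Rabs_pos (a' - a)) (Rabs_pos (d' - a' - (d - a))). intros. nra. }
  eapply Rle_trans. apply abs_sub. eapply Rle_trans. apply Rplus_le_compat_r. apply abs_sub.
  generalize (prod_bound _ _ _ _ (Rle_refl (Rabs (D' - D))) h1) (prod_bound _ _ _ _ h2 h3). lra.
Qed.

Set Default Proof Using "All".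
Section Core.
Variables (tb : R) (g1 g2 p1 p2 : R -> R) (G Lg M Lp z : R).
Hypothesis Htb : 0 < tb.
Hypothesis HG : 0 <= G.
Hypothesis HLg : 0 <= Lg.
Hypothesis HM : 0 <= M.
Hypothesis HLp : 0 <= Lp.
Hypothesis Hz : 4 * (M * Lg + G * Lp) <= z.
Hypothesis Hz1 : z <= 1/10.
Let Cl s := 0 <= s <= tb.
Let Op s := 0 < s < tb.
Hypothesis Hg1b : forall s, Cl s -> Rabs (g1 s) <= G.
Hypothesis Hg2b : forall s, Cl s -> Rabs (g2 s) <= G.
Hypothesis Hp1b : forall s, Cl s -> Rabs (p1 s) <= M.
Hypothesis Hp2b : forall s, Cl s -> Rabs (p2 s) <= M.
Hypothesis Hg1l : forall s t, Cl s -> Cl t -> Rabs (g1 s - g1 t) <= Lg * Rabs (s - t).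
Hypothesis Hg2l : forall s t, Cl s -> Cl t -> Rabs (g2 s - g2 t) <= Lg * Rabs (s - t).
Hypothesis Hp1l : forall s t, Cl s -> Cl t -> Rabs (p1 s - p1 t) <= Lp * Rabs (s - t).
Hypothesis Hp2l : forall s t, Cl s -> Cl t -> Rabs (p2 s - p2 t) <= Lp * Rabs (s - t).
Hypothesis Hg10 : g1 0 = 0.
Hypothesis Hg1tb : g1 tb = 0.
Hypothesis Hg20 : g2 0 = 0.
Hypothesis Hg2tb : g2 tb = 0.
Hypothesis Hp0 : p1 0 = p2 0.
Hypothesis Hptb : p1 tb = p2 tb.
Hypothesis Hsign : forall t, Op t -> g1 t < 0 < g2 t.
Hypothesis Hconv : convex_on (Iopen tb) g1.
Hypothesis Hconc : concave_on (Iopen tb) g2.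

Lemma z_nonneg : 0 <= z.
Proof. nra. Qed.

Definition F s l := l - s + 2 * (g2 l - g1 s) * (p2 l + p1 s).


Lemma F_diff s s' l l' : Cl s -> Cl s' -> Cl l -> Cl l' ->
  Rabs ((F s' l' - (l' - s')) - (F s l - (l - s))) <= z * (Rabs (s' - s) + Rabs (l' - l)).
Proof.
  intros Hs Hs' Hl Hl'. unfold F.
  set (X := g2 l - g1 s). set (X' := g2 l' - g1 s').
  set (Y := p2 l + p1 s). set (Y' := p2 l' + p1 s').
  replace (l' - s' + 2 * X' * Y' - (l' - s') - (l - s + 2 * X * Y - (l - s)))
    with (2 * ((X' - X) * Y' + X * (Y' - Y))) by ring.
  set (S := Rabs (s' - s) + Rabs (l' - l)).
  assert (h1 : Rabs (X' - X) <= Lg * S).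
  { unfold X, X'. replace (g2 l' - g1 s' - (g2 l - g1 s)) with ((g2 l' - g2 l) - (g1 s' - g1 s)) by ring.
    eapply Rle_trans. apply abs_sub. generalize (Hg2l l' l Hl' Hl) (Hg1l s' s Hs' Hs). unfold S. lra. }
  assert (h2 : Rabs (Y' - Y) <= Lp * S).
  { unfold Y, Y'. replace (p2 l' + p1 s' - (p2 l + p1 s)) with ((p2 l' - p2 l) + (p1 s' - p1 s)) by ring.
    eapply Rle_trans. apply Rabs_triang. generalize (Hp2l l' l Hl' Hl) (Hp1l s' s Hs' Hs). unfold S. lra. }
  assert (h3 : Rabs Y' <= 2 * M).
  { unfold Y'. eapply Rle_trans. apply Rabs_triang. generalize (Hp2b l' Hl') (Hp1b s' Hs'). lra. }
  assert (h4 : Rabs X <= 2 * G).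
  { unfold X. eapply Rle_trans. apply abs_sub. generalize (Hg2b l Hl) (Hg1b s Hs). lra. }
  assert (HS : 0 <= S) by (unfold S; generalize (Rabs_pos (s'-s)) (Rabs_pos (l'-l)); lra).
  rewrite Rabs_mult, (Rabs_right 2) by lra.
  assert (Rabs ((X' - X) * Y' + X * (Y' - Y)) <= Lg * S * (2 * M) + 2 * G * (Lp * S)).
  { eapply Rle_trans. apply Rabs_triang. apply Rplus_le_compat; apply prod_bound; auto. }
  nra.
Qed.

Lemma F_00 : F 0 0 = 0.
Proof. unfold F. rewrite Hg10, Hg20. ring. Qed.
Lemma F_tbtb : F tb tb = 0.
Proof. unfold F. rewrite Hg1tb, Hg2tb. ring. Qed.

Lemma Cl0 : Cl 0. Proof. unfold Cl; lra. Qed.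
Lemma Cltb : Cl tb. Proof. unfold Cl; lra. Qed.

Lemma F_lip s l l' : Cl s -> Cl l -> Cl l' -> Rabs (F s l - F s l') <= (1 + z) * Rabs (l - l').
Proof.
  intros Hs Hl Hl'. generalize (F_diff s s l' l Hs Hs Hl' Hl).
  replace (s - s) with 0 by ring. rewrite Rabs_R0.
  intros H. replace (F s l - F s l') with ((l - l') + (F s l - (l - s) - (F s l' - (l' - s)))) by ring.
  eapply Rle_trans. apply Rabs_triang. lra.
Qed.

Lemma F_mono s l l' : Cl s -> Cl l -> Cl l' -> l <= l' -> (1 - z) * (l' - l) <= F s l' - F s l.
Proof.
  intros Hs Hl Hl' Hle. generalize (F_diff s s l l' Hs Hs Hl Hl').
  replace (s - s) with 0 by ring. rewrite Rabs_R0, (Rabs_right (l' - l)) by lra.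
  intros H. apply abs_le_inv in H. lra.
Qed.

Definition lam s := epsilon (inhabits 0) (fun l => Cl l /\ F s l = 0).

Lemma lam_spec s : Cl s -> Cl (lam s) /\ F s (lam s) = 0.
Proof.
  intros Hs. unfold lam. apply epsilon_spec.
  destruct (lip_ivt (F s) 0 tb (1 + z) 0) as [x [Hx1 Hx2]].
  - lra.
  - generalize z_nonneg; lra.
  - intros x y Hx Hy. apply F_lip; auto.
  - split.
    + generalize (F_diff 0 s 0 0 Cl0 Hs Cl0 Cl0). rewrite F_00.
      replace (0 - 0) with 0 by ring. rewrite Rabs_R0, (Rabs_right (s - 0)) by (unfold Cl in Hs; lra).
      intros H. apply abs_le_inv in H. generalize z_nonneg; unfold Cl in Hs; nra.
    + generalize (F_diff tb s tb tb Cltb Hs Cltb Cltb). rewrite F_tbtb.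
      replace (tb - tb) with 0 by ring. rewrite Rabs_R0, (Rabs_left1 (s - tb)) by (unfold Cl in Hs; lra).
      intros H. apply abs_le_inv in H. generalize z_nonneg; unfold Cl in Hs; nra.
  - exists x. split; auto.
Qed.

Lemma lam_unique s l : Cl s -> Cl l -> F s l = 0 -> l = lam s.
Proof.
  intros Hs Hl HF. destruct (lam_spec s Hs) as [H1 H2].
  destruct (Rtotal_order l (lam s)) as [h|[h|h]]; auto.
  - generalize (F_mono s l (lam s) Hs Hl H1 (Rlt_le _ _ h)). nra.
  - generalize (F_mono s (lam s) l Hs H1 Hl (Rlt_le _ _ h)). nra.
Qed.

Lemma lam0 : lam 0 = 0.
Proof. symmetry. apply lam_unique; auto using Cl0, F_00. Qed.
Lemma lamtb : lam tb = tb.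
Proof. symmetry. apply lam_unique; auto using Cltb, F_tbtb. Qed.

Lemma lam_lip s s' : Cl s -> Cl s' -> s <= s' ->
  9/11 * (s' - s) <= lam s' - lam s <= 11/9 * (s' - s).
Proof.
  intros Hs Hs' Hle. destruct (lam_spec s Hs) as [H1 H2]. destruct (lam_spec s' Hs') as [H1' H2'].
  generalize (F_diff s s' (lam s) (lam s') Hs Hs' H1 H1'). rewrite H2, H2'.
  rewrite (Rabs_right (s' - s)) by lra. generalize z_nonneg. intros hz H.
  destruct (Rle_dec 0 (lam s' - lam s)) as [h|h].
  - rewrite (Rabs_right (lam s' - lam s)) in H by lra. apply abs_le_inv in H. nra.
  - rewrite (Rabs_left (lam s' - lam s)) in H by lra. apply abs_le_inv in H. nra.
Qed.

Lemma lam_abs s s' : Cl s -> Cl s' -> Rabs (lam s' - lam s) <= 11/9 * Rabs (s' - s).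
Proof.
  intros Hs Hs'. destruct (Rle_dec s s') as [h|h].
  - generalize (lam_lip s s' Hs Hs' h). split_Rabs; lra.
  - generalize (lam_lip s' s Hs' Hs (Rlt_le _ _ (Rnot_le_lt _ _ h))). split_Rabs; lra.
Qed.

Lemma lam_cl s : Cl s -> Cl (lam s).
Proof. intros Hs; apply (lam_spec s Hs). Qed.

Lemma lam_op s : Op s -> Op (lam s).
Proof.
  intros Hs. assert (Cl s) by (unfold Cl, Op in *; lra).
  generalize (lam_lip 0 s Cl0 H ltac:(unfold Op in Hs; lra)) (lam_lip s tb H Cltb ltac:(unfold Op in Hs; lra)).
  rewrite lam0, lamtb. unfold Op in *. lra.
Qed.

Lemma lam_surj t : Cl t -> exists s, Cl s /\ lam s = t.
Proof.
  intros Ht. destruct (lip_ivt lam 0 tb (11/9) t) as [x [Hx1 Hx2]].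
  - lra. - lra.
  - intros x y Hx Hy. apply lam_abs; auto.
  - rewrite lam0, lamtb. auto.
  - exists x. split; auto.
Qed.

Lemma lam_strict s s' : Cl s -> Cl s' -> s < s' -> lam s < lam s'.
Proof. intros. generalize (lam_lip s s' H H0 (Rlt_le _ _ H1)). lra. Qed.

Lemma lam_le_inv s s' : Cl s -> Cl s' -> lam s <= lam s' -> s <= s'.
Proof.
  intros. destruct (Rle_dec s s') as [h|h]; auto.
  generalize (lam_strict s' s H0 H (Rnot_le_lt _ _ h)). lra.
Qed.

Definition A s := g1 s.
Definition B s := g2 (lam s).
Definition P s := p1 s.
Definition Q s := p2 (lam s).
Definition T s y := s - 2 * ff (y - A s) (B s - y) (P s) (Q s).
Definition U s y := P s + (y - A s) * (Q s - P s) / (B s - A s).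

Lemma op_cl s : Op s -> Cl s.
Proof. unfold Op, Cl; lra. Qed.

Lemma AB_op s : Op s -> A s < 0 < B s.
Proof.
  intros Hs. unfold A, B. split. apply (Hsign s Hs). apply (Hsign (lam s) (lam_op s Hs)).
Qed.

Lemma A_b s : Cl s -> Rabs (A s) <= G. Proof. intros; apply Hg1b; auto. Qed.
Lemma B_b s : Cl s -> Rabs (B s) <= G. Proof. intros; apply Hg2b; apply lam_cl; auto. Qed.
Lemma P_b s : Cl s -> Rabs (P s) <= M. Proof. intros; apply Hp1b; auto. Qed.
Lemma Q_b s : Cl s -> Rabs (Q s) <= M. Proof. intros; apply Hp2b; apply lam_cl; auto. Qed.
Lemma A_l s s' : Cl s -> Cl s' -> Rabs (A s' - A s) <= Lg * Rabs (s' - s).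
Proof. intros; apply Hg1l; auto. Qed.
Lemma P_l s s' : Cl s -> Cl s' -> Rabs (P s' - P s) <= Lp * Rabs (s' - s).
Proof. intros; apply Hp1l; auto. Qed.
Lemma B_l s s' : Cl s -> Cl s' -> Rabs (B s' - B s) <= Lg * (11/9) * Rabs (s' - s).
Proof.
  intros. unfold B. eapply Rle_trans. apply Hg2l; apply lam_cl; auto.
  rewrite Rmult_assoc. apply Rmult_le_compat_l; auto. apply lam_abs; auto.
Qed.
Lemma Q_l s s' : Cl s -> Cl s' -> Rabs (Q s' - Q s) <= Lp * (11/9) * Rabs (s' - s).
Proof.
  intros. unfold Q. eapply Rle_trans. apply Hp2l; apply lam_cl; auto.
  rewrite Rmult_assoc. apply Rmult_le_compat_l; auto. apply lam_abs; auto.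
Qed.

Definition adm s y := A s <= y <= B s.

Lemma T_diff s s' y y' : Op s -> Op s' -> adm s y -> adm s' y' ->
  Rabs ((T s' y' - s') - (T s y - s)) <= 8 * M * Rabs (y' - y) + 2/9 * Rabs (s' - s).
Proof.
  intros Hs Hs' Hy Hy'. unfold adm in *.
  generalize (AB_op s Hs) (AB_op s' Hs'). intros [hA hB] [hA' hB'].
  assert (Cs := op_cl s Hs). assert (Cs' := op_cl s' Hs').
  unfold T.
  replace (s' - 2 * ff (y' - A s') (B s' - y') (P s') (Q s') - s' - (s - 2 * ff (y - A s) (B s - y) (P s) (Q s) - s))
    with (-2 * (ff (y' - A s') (B s' - y') (P s') (Q s') - ff (y - A s) (B s - y) (P s) (Q s))) by ring.
  rewrite Rabs_mult, (Rabs_left (-2)) by lra.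
  assert (hab : B s - A s <= 2 * G) by (generalize (A_b s Cs) (B_b s Cs); split_Rabs; lra).
  generalize (ff_diff (y - A s) (B s - y) (y' - A s') (B s' - y') (P s) (Q s) (P s') (Q s') M G
    ltac:(lra) ltac:(lra) ltac:(lra) ltac:(lra) ltac:(lra) ltac:(lra) (P_b s' Cs') (Q_b s' Cs') ltac:(lra)).
  intros h.
  assert (h1 : Rabs (y' - A s' - (y - A s)) <= Rabs (y' - y) + Lg * Rabs (s' - s)).
  { replace (y' - A s' - (y - A s)) with ((y' - y) - (A s' - A s)) by ring.
    eapply Rle_trans. apply abs_sub. generalize (A_l s s' Cs Cs'); lra. }
  assert (h2 : Rabs (B s' - y' - (B s - y)) <= Rabs (y' - y) + Lg * (11/9) * Rabs (s' - s)).
  { replace (B s' - y' - (B s - y)) with ((B s' - B s) - (y' - y)) by ring.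
    eapply Rle_trans. apply abs_sub. generalize (B_l s s' Cs Cs'); lra. }
  generalize (P_l s s' Cs Cs') (Q_l s s' Cs Cs') (Rabs_pos (s' - s)) (Rabs_pos (y' - y)). intros.
  assert (Rabs (P s' - P s) + Rabs (Q s' - Q s) <= Lp * (20/9) * Rabs (s' - s)) by lra.
  assert (Rabs (y' - A s' - (y - A s)) + Rabs (B s' - y' - (B s - y)) <= 2 * Rabs (y' - y) + Lg * (20/9) * Rabs (s' - s)) by lra.
  assert (2 * M * (Rabs (y' - A s' - (y - A s)) + Rabs (B s' - y' - (B s - y))) <= 2 * M * (2 * Rabs (y' - y) + Lg * (20/9) * Rabs (s' - s))) by (apply Rmult_le_compat_l; lra).
  assert (2 * G * (Rabs (P s' - P s) + Rabs (Q s' - Q s)) <= 2 * G * (Lp * (20/9) * Rabs (s' - s))) by (apply Rmult_le_compat_l; lra).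
  assert ((M * Lg + G * Lp) * Rabs (s' - s) <= z / 4 * Rabs (s' - s)) by (apply Rmult_le_compat_r; lra).
  nra.
Qed.

Lemma T_mono s s' y : Op s -> Op s' -> adm s y -> adm s' y -> s <= s' ->
  7/9 * (s' - s) <= T s' y - T s y.
Proof.
  intros. generalize (T_diff s s' y y H H0 H1 H2). replace (y - y) with 0 by ring.
  rewrite Rabs_R0, (Rabs_right (s' - s)) by lra. intros h. apply abs_le_inv in h. lra.
Qed.

Lemma T_lip s s' y : Op s -> Op s' -> adm s y -> adm s' y -> Rabs (T s' y - T s y) <= 11/9 * Rabs (s' - s).
Proof.
  intros. generalize (T_diff s s' y y H H0 H1 H2). replace (y - y) with 0 by ring.
  rewrite Rabs_R0. intros h.
  replace (T s' y - T s y) with ((s' - s) + (T s' y - s' - (T s y - s))) by ring.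
  eapply Rle_trans. apply Rabs_triang. lra.
Qed.

Lemma T_y s y y' : Op s -> adm s y -> adm s y' -> Rabs (T s y' - T s y) <= 8 * M * Rabs (y' - y).
Proof.
  intros. generalize (T_diff s s y y' H H H0 H1). replace (s - s) with 0 by ring.
  rewrite Rabs_R0. intros h. replace (T s y' - T s y) with (T s y' - s - (T s y - s)) by ring. lra.
Qed.

Lemma T_inj s s' y : Op s -> Op s' -> adm s y -> adm s' y -> T s y = T s' y -> s = s'.
Proof.
  intros. destruct (Rtotal_order s s') as [h|[h|h]]; auto.
  - generalize (T_mono s s' y H H0 H1 H2 (Rlt_le _ _ h)). lra.
  - generalize (T_mono s' s y H0 H H2 H1 (Rlt_le _ _ h)). lra.
Qed.

Lemma T_atA s : Op s -> T s (A s) = s.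
Proof.
  intros Hs. generalize (AB_op s Hs). intros [h1 h2]. unfold T, ff, fH.
  replace (A s - A s) with 0 by ring. field. lra.
Qed.

Lemma lam_eq s : Cl s -> lam s = s - 2 * (B s - A s) * (P s + Q s).
Proof.
  intros Hs. destruct (lam_spec s Hs) as [_ H]. unfold F in H. unfold A, B, P, Q. lra.
Qed.

Lemma T_atB s : Op s -> T s (B s) = lam s.
Proof.
  intros Hs. generalize (AB_op s Hs). intros [h1 h2]. rewrite (lam_eq s (op_cl s Hs)). unfold T, ff, fH.
  replace (B s - B s) with 0 by ring. field. lra.
Qed.

Lemma T_near s y : Op s -> adm s y ->
  Rabs (T s y - s) <= 8 * M * (y - A s) /\ Rabs (T s y - lam s) <= 8 * M * (B s - y).
Proof.
  intros Hs Hy. unfold adm in Hy. generalize (AB_op s Hs). intros [h1 h2]. assert (Cs := op_cl s Hs).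
  destruct (ff_small (y - A s) (B s - y) (P s) (Q s) M ltac:(lra) ltac:(lra) ltac:(lra) (P_b s Cs) (Q_b s Cs)) as [k1 k2].
  rewrite (lam_eq s Cs). unfold T. split.
  - replace (s - 2 * ff (y - A s) (B s - y) (P s) (Q s) - s) with (-2 * ff (y - A s) (B s - y) (P s) (Q s)) by ring.
    rewrite Rabs_mult, (Rabs_left (-2)) by lra. lra.
  - replace (s - 2 * ff (y - A s) (B s - y) (P s) (Q s) - (s - 2 * (B s - A s) * (P s + Q s)))
      with (-2 * (ff (y - A s) (B s - y) (P s) (Q s) - (y - A s + (B s - y)) * (P s + Q s))) by ring.
    rewrite Rabs_mult, (Rabs_left (-2)) by lra. lra.
Qed.

Lemma zLg : 8 * M * Lg <= 2 * z.
Proof. assert (0 <= G * Lp) by (apply Rmult_le_pos; auto). lra. Qed.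

Lemma conc_ge2 (h : R -> R) a b t y : concave_on (Iopen tb) h -> Op a -> Op b -> a <= t <= b ->
  y <= h a -> y <= h b -> y <= h t.
Proof.
  intros Hc Ha Hb Ht H1 H2. destruct (Req_dec a b) as [E|E].
  { subst. replace t with b by lra. auto. }
  set (th := (b - t) / (b - a)).
  assert (hth : 0 <= th <= 1).
  { unfold th. split. apply Rmult_le_pos; [lra| left; apply Rinv_0_lt_compat; lra].
    apply Rmult_le_reg_r with (b - a); [lra|]. unfold Rdiv. rewrite Rmult_assoc, Rinv_l by lra. lra. }
  assert (ht : t = th * a + (1 - th) * b) by (unfold th; field; lra).
  generalize (Hc a b th Ha Hb hth). rewrite <- ht. intros. nra.
Qed.

Lemma conc_gt2 (h : R -> R) a b c t y : concave_on (Iopen tb) h -> Op a -> Op b -> Op c -> a < t < b -> a <= c <= b ->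
  y <= h a -> y <= h b -> y < h c -> y < h t.
Proof.
  intros Hc Ha Hb Hcc Ht Hac H1 H2 H3.
  destruct (Rle_dec t c) as [tc|tc].
  - set (th := (c - t) / (c - a)).
    assert (hth : 0 <= th < 1).
    { unfold th. split. apply Rmult_le_pos; [lra| left; apply Rinv_0_lt_compat; lra].
      apply Rmult_lt_reg_r with (c - a); [lra|]. unfold Rdiv. rewrite Rmult_assoc, Rinv_l by lra. lra. }
    assert (ht : t = th * a + (1 - th) * c) by (unfold th; field; lra).
    generalize (Hc a c th Ha Hcc ltac:(lra)). rewrite <- ht. intros. nra.
  - set (th := (b - t) / (b - c)).
    assert (hth : 0 < th <= 1).
    { unfold th. split. apply Rmult_lt_0_compat; [lra| apply Rinv_0_lt_compat; lra].
      apply Rmult_le_reg_r with (b - c); [lra|]. unfold Rdiv. rewrite Rmult_assoc, Rinv_l by lra. lra. }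
    assert (ht : t = th * c + (1 - th) * b) by (unfold th; field; lra).
    generalize (Hc c b th Hcc Hb ltac:(lra)). rewrite <- ht. intros. nra.
Qed.

Lemma conv_neg : concave_on (Iopen tb) (fun x => - g1 x).
Proof. intros a b th Ha Hb Hth. generalize (Hconv a b th Ha Hb Hth). lra. Qed.

Lemma roots (h : R -> R) y c : (forall s t, Cl s -> Cl t -> Rabs (h s - h t) <= Lg * Rabs (s - t)) ->
  h 0 = 0 -> h tb = 0 -> 0 < y -> Op c -> y < h c ->
  exists a b, 0 < a < c /\ c < b < tb /\ h a = y /\ h b = y.
Proof.
  intros Hl H0 Htb0 Hy Hc Hhc. unfold Op in Hc.
  destruct (lip_ivt h 0 c Lg y) as [a [Ha1 Ha2]]; try lra.
  { intros; apply Hl; unfold Cl; lra. }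
  destruct (lip_ivt (fun x => - h x) c tb Lg (- y)) as [b [Hb1 Hb2]]; try lra.
  { intros. replace (- h x - - h y0) with (- (h x - h y0)) by ring. rewrite Rabs_Ropp. apply Hl; unfold Cl; lra. }
  exists a, b. repeat split; try lra.
  - destruct (Req_dec a 0); [subst; lra| lra].
  - destruct (Req_dec a c); [subst; lra| lra].
  - destruct (Req_dec b c); [subst; lra| lra].
  - destruct (Req_dec b tb); [subst; lra| lra].
Qed.

Lemma g1neg_l s t : Cl s -> Cl t -> Rabs (- g1 s - - g1 t) <= Lg * Rabs (s - t).
Proof. intros. replace (- g1 s - - g1 t) with (- (g1 s - g1 t)) by ring. rewrite Rabs_Ropp. auto. Qed.

Lemma lam_inv_op a : Op a -> exists s, Op s /\ lam s = a.
Proof.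
  intros Ha. destruct (lam_surj a (op_cl a Ha)) as [s [Hs1 Hs2]]. exists s. split; auto.
  unfold Op, Cl in *. split.
  - destruct (Req_dec s 0); [subst; rewrite lam0 in Ha; lra| lra].
  - destruct (Req_dec s tb); [subst; rewrite lamtb in Ha; lra| lra].
Qed.

Lemma lam_lt_inv s s' : Op s -> Op s' -> lam s < lam s' -> s < s'.
Proof.
  intros. destruct (Rle_dec s' s) as [h|h].
  - generalize (lam_lip s' s (op_cl _ H0) (op_cl _ H) h). lra.
  - lra.
Qed.

Lemma T0_bounds s : Op s -> adm s 0 /\ 4/5 * s <= T s 0 <= 6/5 * s /\
  lam s - 1/5 * (tb - lam s) <= T s 0 <= lam s + 1/5 * (tb - lam s).
Proof.
  intros Hs. generalize (AB_op s Hs). intros [h1 h2]. assert (Cs := op_cl s Hs).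
  assert (ad : adm s 0) by (unfold adm; lra). split; auto.
  destruct (T_near s 0 Hs ad) as [k1 k2].
  assert (e1 : - A s <= Lg * s).
  { generalize (Hg1l s 0 Cs Cl0). rewrite Hg10. unfold A. unfold Op in Hs.
    rewrite (Rabs_right (s - 0)) by lra. split_Rabs; lra. }
  assert (Cl (lam s)) by (apply lam_cl; auto).
  assert (e2 : B s <= Lg * (tb - lam s)).
  { generalize (Hg2l (lam s) tb H Cltb). rewrite Hg2tb. unfold B. unfold Cl in H.
    rewrite (Rabs_left1 (lam s - tb)) by lra. split_Rabs; lra. }
  generalize zLg z_nonneg (lam_op s Hs). intros. unfold Op in *.
  apply abs_le_inv in k1. apply abs_le_inv in k2.
  assert (8 * M * (0 - A s) <= 1/5 * s) by nra.
  assert (8 * M * (B s - 0) <= 1/5 * (tb - lam s)) by nra.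
  lra.
Qed.

Lemma ivt_T s0 s1 y t : s0 <= s1 -> (forall s, s0 <= s <= s1 -> Op s /\ adm s y) ->
  T s0 y <= t <= T s1 y -> exists s, s0 <= s <= s1 /\ T s y = t.
Proof.
  intros Hle Hall Ht. apply (lip_ivt (fun s => T s y) s0 s1 (11/9) t); auto; try lra.
  intros x x' Hx Hx'. destruct (Hall x Hx). destruct (Hall x' Hx'). apply T_lip; auto.
Qed.

Lemma char_in_D s y : Op s -> A s < y < B s -> domD tb g1 g2 y (T s y).
Proof.
  intros Hs Hy. unfold domD, Iopen.
  destruct (Rtotal_order y 0) as [yn|[y0|yp]].
  -
    destruct (roots (fun x => - g1 x) (- y) s g1neg_l ltac:(cbv beta; rewrite Hg10; ring) ltac:(cbv beta; rewrite Hg1tb; ring)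
      ltac:(lra) Hs ltac:(unfold A in Hy; lra)) as [a [b [Ha [Hb [Ea Eb]]]]].
    assert (Oa : Op a) by (unfold Op in *; lra). assert (Ob : Op b) by (unfold Op in *; lra).
    assert (ada : adm a y) by (unfold adm, A; generalize (AB_op a Oa); unfold A; lra).
    assert (adb : adm b y) by (unfold adm, A; generalize (AB_op b Ob); unfold A; lra).
    assert (ads : adm s y) by (unfold adm; lra).
    assert (Ta : T a y = a) by (replace y with (A a) by (unfold A; lra); apply T_atA; auto).
    assert (Tb : T b y = b) by (replace y with (A b) by (unfold A; lra); apply T_atA; auto).
    generalize (T_mono a s y Oa Hs ada ads ltac:(lra)) (T_mono s b y Hs Ob ads adb ltac:(lra)). intros m1 m2.
    assert (Hop : Op (T s y)) by (unfold Op in *; lra).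
    split; auto. split.
    + assert (- y < - g1 (T s y)).
      { apply (conc_gt2 (fun x => - g1 x) a b s (T s y) (- y) conv_neg Oa Ob Hs); try lra.
        unfold A in Hy; lra. }
      lra.
    + generalize (Hsign _ Hop). lra.
  -
    subst y. destruct (T0_bounds s Hs) as [_ [k1 k2]]. generalize (lam_op s Hs). unfold Op in *. intros.
    assert (Hop : Op (T s 0)) by (unfold Op; nra).
    split. exact Hop. apply Hsign; auto.
  -
    destruct (roots g2 y (lam s) Hg2l Hg20 Hg2tb yp (lam_op s Hs) ltac:(unfold B in Hy; lra))
      as [a [b [Ha [Hb [Ea Eb]]]]].
    assert (Oa : Op a) by (unfold Op in *; lra). assert (Ob : Op b) by (unfold Op in *; lra).
    destruct (lam_inv_op a Oa) as [s0 [Os0 Es0]].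
    destruct (lam_inv_op b Ob) as [s1 [Os1 Es1]].
    assert (s0 < s) by (apply lam_lt_inv; auto; lra).
    assert (s < s1) by (apply lam_lt_inv; auto; lra).
    assert (ad0 : adm s0 y) by (unfold adm, B; rewrite Es0; generalize (AB_op s0 Os0); lra).
    assert (ad1 : adm s1 y) by (unfold adm, B; rewrite Es1; generalize (AB_op s1 Os1); lra).
    assert (ads : adm s y) by (unfold adm; lra).
    assert (T0 : T s0 y = a) by (replace y with (B s0) by (unfold B; rewrite Es0; lra); rewrite T_atB; auto).
    assert (T1 : T s1 y = b) by (replace y with (B s1) by (unfold B; rewrite Es1; lra); rewrite T_atB; auto).
    generalize (T_mono s0 s y Os0 Hs ad0 ads ltac:(lra)) (T_mono s s1 y Hs Os1 ads ad1 ltac:(lra)). intros m1 m2.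
    assert (Hop : Op (T s y)) by (unfold Op in *; lra).
    split; auto. split.
    + generalize (Hsign _ Hop). lra.
    + apply (conc_gt2 g2 a b (lam s) (T s y) y Hconc Oa Ob (lam_op s Hs)); try lra.
      unfold B in Hy; lra.
Qed.

Lemma surj_D y t : domD tb g1 g2 y t -> exists s, Op s /\ A s < y < B s /\ T s y = t.
Proof.
  intros [Ht [Hy1 Hy2]]. change (Op t) in Ht.
  destruct (Rtotal_order y 0) as [yn|[y0|yp]].
  - destruct (roots (fun x => - g1 x) (- y) t g1neg_l ltac:(cbv beta; rewrite Hg10; ring) ltac:(cbv beta; rewrite Hg1tb; ring)
      ltac:(lra) Ht ltac:(lra)) as [a [b [Ha [Hb [Ea Eb]]]]].
    assert (Oa : Op a) by (unfold Op in *; lra). assert (Ob : Op b) by (unfold Op in *; lra).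
    assert (all : forall s, a <= s <= b -> Op s /\ adm s y).
    { intros s Hs. assert (Os : Op s) by (unfold Op in *; lra). split; auto.
      unfold adm. generalize (AB_op s Os). intros [_ hB]. split; [|lra].
      assert (- y <= - g1 s) by (apply (conc_ge2 (fun x => - g1 x) a b s (- y) conv_neg Oa Ob); lra).
      unfold A; lra. }
    assert (Ta : T a y = a) by (replace y with (A a) by (unfold A; lra); apply T_atA; auto).
    assert (Tb : T b y = b) by (replace y with (A b) by (unfold A; lra); apply T_atA; auto).
    destruct (ivt_T a b y t ltac:(lra) all ltac:(lra)) as [s [Hs Es]].
    destruct (all s Hs) as [Os ads]. exists s. split; auto. split; auto. split.
    + destruct (Req_dec (A s) y) as [E|E].
      * exfalso. rewrite <- E in Es. rewrite T_atA in Es; auto. rewrite Es in E. unfold A in E. lra.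
      * unfold adm in ads. lra.
    + generalize (AB_op s Os); lra.
  - subst y. set (s0 := t / 2).
    assert (O0 : Op s0). { unfold s0. unfold Op in *. lra. }
    destruct (lam_inv_op ((t + tb) / 2) ltac:(unfold Op in *; lra)) as [s1 [O1 E1]].
    destruct (T0_bounds s0 O0) as [ad0 [k1 k2]]. destruct (T0_bounds s1 O1) as [ad1 [k3 k4]].
    rewrite E1 in k4.
    assert (T s0 0 < t) by (unfold s0 in *; unfold Op in *; lra).
    assert (t < T s1 0) by (unfold Op in *; lra).
    assert (s0 <= s1).
    { destruct (Rle_dec s0 s1) as [h|h]; auto.
      generalize (T_mono s1 s0 0 O1 O0 ad1 ad0 ltac:(lra)). lra. }
    assert (all : forall s, s0 <= s <= s1 -> Op s /\ adm s 0).
    { intros s Hs. assert (Os : Op s) by (unfold Op in *; lra). split; auto.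
      unfold adm. generalize (AB_op s Os). lra. }
    destruct (ivt_T s0 s1 0 t H1 all ltac:(lra)) as [s [Hs Es]].
    destruct (all s Hs) as [Os ads]. exists s. split; auto. split; auto. apply AB_op; auto.
  - destruct (roots g2 y t Hg2l Hg20 Hg2tb yp Ht ltac:(lra)) as [a [b [Ha [Hb [Ea Eb]]]]].
    assert (Oa : Op a) by (unfold Op in *; lra). assert (Ob : Op b) by (unfold Op in *; lra).
    destruct (lam_inv_op a Oa) as [s0 [Os0 Es0]].
    destruct (lam_inv_op b Ob) as [s1 [Os1 Es1]].
    assert (s0 < s1) by (apply lam_lt_inv; auto; lra).
    assert (all : forall s, s0 <= s <= s1 -> Op s /\ adm s y).
    { intros s Hs. assert (Os : Op s) by (unfold Op in *; lra). split; auto.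
      unfold adm. generalize (AB_op s Os). intros [hA _]. split; [lra|].
      generalize (lam_lip s0 s (op_cl _ Os0) (op_cl _ Os) ltac:(lra)) (lam_lip s s1 (op_cl _ Os) (op_cl _ Os1) ltac:(lra)).
      intros. unfold B. apply (conc_ge2 g2 a b (lam s) y Hconc Oa Ob); lra. }
    assert (T0 : T s0 y = a) by (replace y with (B s0) by (unfold B; rewrite Es0; lra); rewrite T_atB; auto).
    assert (T1 : T s1 y = b) by (replace y with (B s1) by (unfold B; rewrite Es1; lra); rewrite T_atB; auto).
    destruct (ivt_T s0 s1 y t ltac:(lra) all ltac:(lra)) as [s [Hs Es]].
    destruct (all s Hs) as [Os ads]. exists s. split; auto. split; auto. split.
    + generalize (AB_op s Os); lra.
    + destruct (Req_dec (B s) y) as [E|E].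
      * exfalso. rewrite <- E in Es. rewrite T_atB in Es; auto. unfold B in E. rewrite Es in E. lra.
      * unfold adm in ads. lra.
Qed.

Definition mu := - g1 (tb / 2).
Lemma mu_pos : 0 < mu.
Proof. unfold mu. generalize (Hsign (tb/2) ltac:(unfold Op; lra)). lra. Qed.

Lemma g1_lower s : Op s -> (s <= tb/2 -> mu * s <= tb * (- g1 s)) /\ (tb/2 <= s -> mu * (tb - s) <= tb * (- g1 s)).
Proof.
  intros Hs. assert (Om : Op (tb/2)) by (unfold Op; lra). unfold Op in Hs.
  assert (mp := mu_pos).
  assert (gs : 0 < - g1 s) by (generalize (Hsign s ltac:(unfold Op; lra)); lra).
  destruct (Rle_dec s (tb/2)) as [h|h].
  - set (e := s / 2). set (th := (s - e) / (tb / 2 - e)).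
    assert (Oe : Op e) by (unfold e, Op; lra).
    assert (hth : 0 <= th <= 1).
    { unfold th, e. split. apply Rmult_le_pos; [lra| left; apply Rinv_0_lt_compat; lra].
      apply Rmult_le_reg_r with (tb/2 - s/2); [lra|]. unfold Rdiv. rewrite Rmult_assoc, Rinv_l by lra. lra. }
    assert (hs : s = th * (tb / 2) + (1 - th) * e) by (unfold th, e; field; lra).
    generalize (Hconv (tb/2) e th Om Oe hth). rewrite <- hs. intros hc.
    generalize (Hsign e Oe). intros [ge _].
    assert (mth : th * mu <= - g1 s) by (unfold mu; nra).
    assert (tth : s <= tb * th).
    { unfold th, e. apply Rmult_le_reg_r with (tb / 2 - s / 2); [lra|].
      replace (tb * ((s - s / 2) / (tb / 2 - s / 2)) * (tb / 2 - s / 2)) with (tb * (s / 2)) by (field; lra). nra. }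
    split; intros; nra.
  - set (e := (s + tb) / 2). set (th := (e - s) / (e - tb / 2)).
    assert (Oe : Op e) by (unfold e, Op; lra).
    assert (hth : 0 <= th <= 1).
    { unfold th, e. split. apply Rmult_le_pos; [lra| left; apply Rinv_0_lt_compat; lra].
      apply Rmult_le_reg_r with ((s + tb)/2 - tb/2); [lra|]. unfold Rdiv. rewrite Rmult_assoc, Rinv_l by lra. lra. }
    assert (hs : s = th * (tb / 2) + (1 - th) * e) by (unfold th, e; field; lra).
    generalize (Hconv (tb/2) e th Om Oe hth). rewrite <- hs. intros hc.
    generalize (Hsign e Oe). intros [ge _].
    assert (mth : th * mu <= - g1 s) by (unfold mu; nra).
    assert (tth : tb - s <= tb * th).
    { unfold th, e. apply Rmult_le_reg_r with ((s + tb) / 2 - tb / 2); [lra|].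
      replace (tb * (((s + tb) / 2 - s) / ((s + tb) / 2 - tb / 2)) * ((s + tb) / 2 - tb / 2)) with (tb * ((tb - s) / 2)) by (field; lra). nra. }
    split; intros; nra.
Qed.

Lemma small_bounds s : Op s ->
  Rabs (Q s - P s) <= 20/9 * Lp * s /\ Rabs (Q s - P s) <= 20/9 * Lp * (tb - s) /\
  B s - A s <= 20/9 * Lg * s /\ B s - A s <= 20/9 * Lg * (tb - s) /\
  9/11 * (tb - s) <= tb - lam s <= 11/9 * (tb - s) /\ lam s <= 11/9 * s.
Proof.
  intros Hs. assert (Cs := op_cl s Hs). unfold Op in Hs.
  generalize (lam_lip 0 s Cl0 Cs ltac:(lra)) (lam_lip s tb Cs Cltb ltac:(lra)). rewrite lam0, lamtb. intros l1 l2.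
  assert (Cl (lam s)) by (apply lam_cl; auto).
  generalize (Hp1l s 0 Cs Cl0) (Hp2l (lam s) 0 H Cl0) (Hp1l s tb Cs Cltb) (Hp2l (lam s) tb H Cltb)
    (Hg1l s 0 Cs Cl0) (Hg2l (lam s) 0 H Cl0) (Hg1l s tb Cs Cltb) (Hg2l (lam s) tb H Cltb).
  rewrite Hg10, Hg20, Hg1tb, Hg2tb. unfold Cl in H.
  rewrite (Rabs_right (s - 0)), (Rabs_right (lam s - 0)), (Rabs_left1 (s - tb)), (Rabs_left1 (lam s - tb)) by lra.
  unfold Q, P, A, B. rewrite Hp0, Hptb. intros. 
  repeat split; try lra.
  - replace (p2 (lam s) - p1 s) with ((p2 (lam s) - p2 0) - (p1 s - p2 0)) by ring.
    eapply Rle_trans. apply abs_sub. nra.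
  - replace (p2 (lam s) - p1 s) with ((p2 (lam s) - p2 tb) - (p1 s - p2 tb)) by ring.
    eapply Rle_trans. apply abs_sub. nra.
  - revert H4 H5. split_Rabs; nra.
  - revert H6 H7. split_Rabs; nra.
Qed.

Definition K := 3 * Lp * tb / mu.
Lemma K_nonneg : 0 <= K.
Proof. unfold K. generalize mu_pos. intros. apply Rmult_le_pos. nra. left; apply Rinv_0_lt_compat; auto. Qed.

Lemma KD s : Op s -> Rabs (Q s - P s) <= K * (B s - A s).
Proof.
  intros Hs. destruct (small_bounds s Hs) as [d1 [d2 _]].
  destruct (g1_lower s Hs) as [e1 e2]. generalize (AB_op s Hs) mu_pos. intros [hA hB] mp.
  unfold K. apply Rmult_le_reg_l with mu; auto.
  replace (mu * (3 * Lp * tb / mu * (B s - A s))) with (3 * Lp * tb * (B s - A s)) by (field; lra).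
  unfold A in *. unfold Op in Hs.
  destruct (Rle_dec s (tb/2)).
  - specialize (e1 r). assert (mu * Rabs (Q s - P s) <= mu * (20/9 * Lp * s)) by (apply Rmult_le_compat_l; lra).
    assert (Lp * (mu * s) <= Lp * (tb * - g1 s)) by (apply Rmult_le_compat_l; auto).
    assert (0 <= Lp * tb * B s) by (apply Rmult_le_pos; [apply Rmult_le_pos|]; lra).
    assert (0 <= Lp * tb * (- g1 s)) by (apply Rmult_le_pos; [apply Rmult_le_pos|]; lra).
    nra.
  - specialize (e2 ltac:(lra)). assert (mu * Rabs (Q s - P s) <= mu * (20/9 * Lp * (tb - s))) by (apply Rmult_le_compat_l; lra).
    assert (Lp * (mu * (tb - s)) <= Lp * (tb * - g1 s)) by (apply Rmult_le_compat_l; auto).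
    assert (0 <= Lp * tb * B s) by (apply Rmult_le_pos; [apply Rmult_le_pos|]; lra).
    assert (0 <= Lp * tb * (- g1 s)) by (apply Rmult_le_pos; [apply Rmult_le_pos|]; lra).
    nra.
Qed.

Lemma U_form s y : Op s -> U s y = P s - (y - A s) * (P s - Q s) / (B s - A s).
Proof. intros. generalize (AB_op s H). intros. unfold U. field. lra. Qed.

Lemma U1 s y y' : Op s -> adm s y -> adm s y' -> Rabs (U s y' - U s y) <= K * Rabs (y' - y).
Proof.
  intros Hs Hy Hy'. generalize (AB_op s Hs). intros [hA hB].
  replace (U s y' - U s y) with ((y' - y) * ((Q s - P s) / (B s - A s))) by (unfold U; field; lra).
  rewrite Rabs_mult. rewrite Rmult_comm. apply Rmult_le_compat_r. apply Rabs_pos.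
  apply div_le. lra. apply KD; auto.
Qed.

Definition CU := 4 * Lp + 3 * K * Lg.

Lemma U2 s s' y : Op s -> Op s' -> adm s y -> adm s' y -> Rabs (U s' y - U s y) <= CU * Rabs (s' - s).
Proof.
  intros Hs Hs' Hy Hy'. unfold adm in *. rewrite (U_form s y Hs), (U_form s' y Hs').
  generalize (AB_op s Hs) (AB_op s' Hs'). intros [hA hB] [hA' hB'].
  assert (Cs := op_cl s Hs). assert (Cs' := op_cl s' Hs').
  eapply Rle_trans. apply U_alg; try lra.
  rewrite <- Rabs_Ropp. replace (- (P s' - Q s')) with (Q s' - P s') by ring. apply KD; auto.
  replace (y - A s' - (y - A s)) with (- (A s' - A s)) by ring. rewrite Rabs_Ropp.
  replace (B s' - A s' - (y - A s') - (B s - A s - (y - A s))) with (B s' - B s) by ring.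
  replace (P s' - Q s' - (P s - Q s)) with ((P s' - P s) - (Q s' - Q s)) by ring.
  generalize (P_l s s' Cs Cs') (Q_l s s' Cs Cs') (A_l s s' Cs Cs') (B_l s s' Cs Cs') (abs_sub (P s' - P s) (Q s' - Q s))
    K_nonneg (Rabs_pos (s' - s)). intros.
  unfold CU.
  assert (K * (Rabs (A s' - A s) + Rabs (B s' - B s)) <= K * (Lg * (20/9) * Rabs (s' - s))) by (apply Rmult_le_compat_l; lra).
  assert (0 <= K * Lg * Rabs (s' - s)) by (apply Rmult_le_pos; [apply Rmult_le_pos|]; lra).
  assert (0 <= Lp * Rabs (s' - s)) by (apply Rmult_le_pos; lra).
  nra.
Qed.

Lemma mid s s' y y' : Op s -> Op s' -> adm s y -> adm s' y' ->
  exists w, adm s w /\ adm s' w /\ Rabs (y - w) + Rabs (w - y') = Rabs (y - y').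
Proof.
  intros Hs Hs' Hy Hy'. unfold adm in *. generalize (AB_op s Hs) (AB_op s' Hs'). intros [hA hB] [hA' hB'].
  destruct (Rle_dec (A s') y) as [h1|h1]; [destruct (Rle_dec y (B s')) as [h2|h2]|].
  - exists y. split; [lra|split;[lra|]]. replace (y - y) with 0 by ring. rewrite Rabs_R0. ring.
  - destruct (Rle_dec (A s) y') as [h3|h3]; [destruct (Rle_dec y' (B s)) as [h4|h4]|].
    + exists y'. split; [lra|split;[lra|]]. replace (y' - y') with 0 by ring. rewrite Rabs_R0. ring.
    + lra.
    + exists 0. split; [lra|split;[lra|]]. split_Rabs; lra.
  - destruct (Rle_dec (A s) y') as [h3|h3]; [destruct (Rle_dec y' (B s)) as [h4|h4]|].
    + exists y'. split; [lra|split;[lra|]]. replace (y' - y') with 0 by ring. rewrite Rabs_R0. ring.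
    + exists 0. split; [lra|split;[lra|]]. split_Rabs; lra.
    + lra.
Qed.

Definition L0 := K + 16 * CU * M + 2 * CU.

Lemma CU_nonneg : 0 <= CU.
Proof. unfold CU. generalize K_nonneg. intros. nra. Qed.

Lemma U_lip s s' y y' : Op s -> Op s' -> adm s y -> adm s' y' ->
  Rabs (U s' y' - U s y) <= L0 * Rabs (y' - y) + L0 * Rabs (T s' y' - T s y).
Proof.
  intros Hs Hs' Hy Hy'. destruct (mid s s' y y' Hs Hs' Hy Hy') as [w [hw [hw' hd]]].
  assert (es : 7/9 * Rabs (s' - s) <= Rabs (T s' w - T s w)).
  { destruct (Rle_dec s s') as [h|h].
    - generalize (T_mono s s' w Hs Hs' hw hw' h). split_Rabs; lra.
    - generalize (T_mono s' s w Hs' Hs hw' hw ltac:(lra)). split_Rabs; lra. }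
  generalize (T_y s y w Hs Hy hw) (T_y s' w y' Hs' hw' Hy'). intros t1 t2.
  rewrite (Rabs_minus_sym (T s w)), (Rabs_minus_sym w) in t1.
  rewrite (Rabs_minus_sym (T s' y')), (Rabs_minus_sym y') in t2.
  generalize (tri3 (T s' w) (T s' y') (T s y) (T s w)). intros tr.
  generalize (U1 s y w Hs Hy hw) (U2 s s' w Hs Hs' hw hw') (U1 s' w y' Hs' hw' Hy'). intros u1 u2 u3.
  rewrite (Rabs_minus_sym w y) in u1. 
  generalize (tri3 (U s' y') (U s' w) (U s w) (U s y)). intros ur.
  rewrite (Rabs_minus_sym y' y).
  generalize CU_nonneg K_nonneg HM (Rabs_pos (y - w)) (Rabs_pos (w - y')) (Rabs_pos (T s' y' - T s y)) (Rabs_pos (s' - s)).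
  intros. unfold L0.
  assert (CU * Rabs (s' - s) <= CU * (9/7 * (8 * M * Rabs (y - y') + Rabs (T s' y' - T s y)))).
  { apply Rmult_le_compat_l; auto. rewrite <- hd. lra. }
  assert (K * Rabs (y - w) + K * Rabs (w - y') = K * Rabs (y - y')) by (rewrite <- hd; ring).
  rewrite (Rabs_minus_sym y' w) in u3.
  assert (0 <= CU * M * Rabs (y - y')) by (apply Rmult_le_pos; [apply Rmult_le_pos|]; auto; apply Rabs_pos).
  assert (0 <= CU * Rabs (T s' y' - T s y)) by (apply Rmult_le_pos; auto).
  nra.
Qed.

Lemma corner0 s y : Op s -> adm s y -> Rabs (U s y - p1 0) <= 6 * Lp * T s y /\ 0 < T s y.
Proof.
  intros Hs Hy. destruct (small_bounds s Hs) as [d1 [d2 [d3 [d4 _]]]].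
  destruct (T_near s y Hs Hy) as [k1 _]. generalize (AB_op s Hs) zLg z_nonneg. intros [hA hB] zl zn.
  unfold adm in Hy. unfold Op in Hs.
  assert (8 * M * (y - A s) <= 8 * M * (20/9 * Lg * s)) by (apply Rmult_le_compat_l; lra).
  apply abs_le_inv in k1.
  assert (tl : 5/9 * s <= T s y) by nra.
  split; [|lra].
  rewrite (U_form s y ltac:(unfold Op; lra)).
  assert (Cs : Cl s) by (unfold Cl; lra).
  generalize (Hp1l s 0 Cs Cl0). rewrite (Rabs_right (s - 0)) by lra. intros hp.
  assert (Rabs ((y - A s) * (P s - Q s) / (B s - A s)) <= Rabs (Q s - P s)).
  { apply div_le. lra. rewrite Rabs_mult, (Rabs_right (y - A s)) by lra. rewrite Rabs_minus_sym.
    generalize (Rabs_pos (Q s - P s)). nra. }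
  replace (P s - (y - A s) * (P s - Q s) / (B s - A s) - p1 0) with ((p1 s - p1 0) - (y - A s) * (P s - Q s) / (B s - A s)) by (unfold P; ring).
  eapply Rle_trans. apply abs_sub. nra.
Qed.

Lemma cornertb s y : Op s -> adm s y -> Rabs (U s y - p1 tb) <= 12 * Lp * (tb - T s y) /\ T s y < tb.
Proof.
  intros Hs Hy. destruct (small_bounds s Hs) as [d1 [d2 [d3 [d4 [l1 l2]]]]].
  destruct (T_near s y Hs Hy) as [_ k1]. generalize (AB_op s Hs) zLg z_nonneg. intros [hA hB] zl zn.
  unfold adm in Hy. unfold Op in Hs.
  assert (8 * M * (B s - y) <= 8 * M * (20/9 * Lg * (tb - s))) by (apply Rmult_le_compat_l; lra).
  apply abs_le_inv in k1.
  assert (tl : 1/3 * (tb - s) <= tb - T s y) by nra.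
  split; [|lra].
  assert (U s y = Q s + (B s - y) * (P s - Q s) / (B s - A s)) by (unfold U; field; lra).
  rewrite H0.
  assert (Cs : Cl s) by (unfold Cl; lra).
  assert (Cl (lam s)) by (apply lam_cl; auto).
  generalize (Hp2l (lam s) tb H1 Cltb). unfold Cl in H1. rewrite (Rabs_left1 (lam s - tb)) by lra. intros hp.
  assert (Rabs ((B s - y) * (P s - Q s) / (B s - A s)) <= Rabs (Q s - P s)).
  { apply div_le. lra. rewrite Rabs_mult, (Rabs_right (B s - y)) by lra. rewrite Rabs_minus_sym.
    generalize (Rabs_pos (Q s - P s)). nra. }
  rewrite Hptb.
  replace (Q s + (B s - y) * (P s - Q s) / (B s - A s) - p2 tb) with ((p2 (lam s) - p2 tb) + (B s - y) * (P s - Q s) / (B s - A s)) by (unfold Q; ring).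
  eapply Rle_trans. apply Rabs_triang. nra.
Qed.

End Core.

Lemma lub_le (E : R -> Prop) c x0 : E x0 -> (forall x, E x -> x <= c) ->
  (forall x, E x -> x <= real (Lub_Rbar E)) /\ real (Lub_Rbar E) <= c.
Proof.
  intros H0 Hc. generalize (Lub_Rbar_correct E). destruct (Lub_Rbar E) as [r| |]; intros [ub lub].
  - split.
    + intros x Hx. apply (ub x Hx).
    + apply (lub (Finite c)). intros x Hx. apply Hc; auto.
  - exfalso. apply (lub (Finite c)). intros x Hx. apply Hc; auto.
  - exfalso. apply (ub x0 H0).
Qed.

Lemma quot_le a d L : 0 < d -> a <= L * d -> a / d <= L.
Proof. intros. unfold Rdiv. apply Rmult_le_reg_r with d; auto. rewrite Rmult_assoc, Rinv_l by lra. lra. Qed.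

Lemma lipI_ok tb f : 0 < tb -> lip_on (Iopen tb) f ->
  0 <= lipI tb f /\ forall s t, Iopen tb s -> Iopen tb t -> Rabs (f s - f t) <= lipI tb f * Rabs (s - t).
Proof.
  intros Htb [L HL]. unfold lipI.
  set (E := fun r => exists s t, Iopen tb s /\ Iopen tb t /\ s <> t /\ r = Rabs (f s - f t) / Rabs (s - t)).
  assert (Ex : E (Rabs (f (tb/3) - f (2*tb/3)) / Rabs (tb/3 - 2*tb/3))).
  { exists (tb/3), (2*tb/3). unfold Iopen. repeat split; try lra. }
  assert (Hc : forall x, E x -> x <= Rabs L).
  { intros x [s [t [Hs [Ht [Hst ->]]]]]. apply quot_le.
    apply Rabs_pos_lt; lra. eapply Rle_trans. apply HL; auto.
    apply Rmult_le_compat_r. apply Rabs_pos. apply RRle_abs. }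
  destruct (lub_le E (Rabs L) _ Ex Hc) as [H1 H2].
  split.
  - eapply Rle_trans; [|apply (H1 _ Ex)]. apply Rmult_le_pos. apply Rabs_pos.
    left; apply Rinv_0_lt_compat. apply Rabs_pos_lt; lra.
  - intros s t Hs Ht. destruct (Req_dec s t) as [E'|E'].
    + subst. replace (f t - f t) with 0 by ring. replace (t - t) with 0 by ring. rewrite Rabs_R0. lra.
    + assert (hq := H1 _ (ex_intro _ s (ex_intro _ t (conj Hs (conj Ht (conj E' eq_refl)))))).
      assert (0 < Rabs (s - t)) by (apply Rabs_pos_lt; lra).
      replace (Rabs (f s - f t)) with (Rabs (f s - f t) / Rabs (s - t) * Rabs (s - t)) by (field; lra).
      apply Rmult_le_compat_r; lra.
Qed.

Lemma supI_ok tb f : 0 < tb -> lip_on (Iopen tb) f ->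
  0 <= supI tb f /\ forall t, Iopen tb t -> Rabs (f t) <= supI tb f.
Proof.
  intros Htb [L HL]. unfold supI.
  set (E := fun r => exists t, Iopen tb t /\ r = Rabs (f t)).
  assert (Ex : E (Rabs (f (tb/2)))). { exists (tb/2). unfold Iopen. split; [lra|auto]. }
  assert (Hc : forall x, E x -> x <= Rabs (f (tb/2)) + Rabs L * tb).
  { intros x [t [Ht ->]]. assert (Hm : Iopen tb (tb/2)) by (unfold Iopen; lra).
    generalize (HL t (tb/2) Ht Hm). unfold Iopen in Ht.
    assert (Rabs (t - tb/2) <= tb) by (split_Rabs; lra).
    assert (L * Rabs (t - tb / 2) <= Rabs L * tb).
    { apply Rle_trans with (Rabs L * Rabs (t - tb/2)). apply Rmult_le_compat_r. apply Rabs_pos. apply RRle_abs.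
      apply Rmult_le_compat_l; auto. apply Rabs_pos. }
    intros. generalize (Rabs_triang_inv (f t) (f (tb/2))). lra. }
  destruct (lub_le E _ _ Ex Hc) as [H1 H2].
  split.
  - eapply Rle_trans; [|apply (H1 _ Ex)]. apply Rabs_pos.
  - intros t Ht. apply H1. exists t. auto.
Qed.

Lemma distW_ge y t y' t' : Rabs (y - y') <= distW y t y' t' /\ Rabs (t - t') <= distW y t y' t'.
Proof.
  unfold distW. replace ((y - y') ^ 2) with ((y - y') * (y - y')) by ring.
  replace ((t - t') ^ 2) with ((t - t') * (t - t')) by ring.
  generalize (Rle_0_sqr (y - y')) (Rle_0_sqr (t - t')). unfold Rsqr. intros.
  split; rewrite <- sqrt_Rsqr_abs; apply sqrt_le_1_alt; unfold Rsqr; lra.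
Qed.

Lemma distW_le y t y' t' : distW y t y' t' <= Rabs (y - y') + Rabs (t - t').
Proof.
  unfold distW. rewrite <- (sqrt_Rsqr (Rabs (y - y') + Rabs (t - t'))).
  apply sqrt_le_1_alt. unfold Rsqr.
  replace ((y - y') ^ 2) with ((y - y') * (y - y')) by ring.
  replace ((t - t') ^ 2) with ((t - t') * (t - t')) by ring.
  assert (Rabs (y - y') * Rabs (y - y') = (y - y') * (y - y')) by (rewrite <- Rabs_mult; apply Rabs_right; apply Rle_ge; apply Rle_0_sqr).
  assert (Rabs (t - t') * Rabs (t - t') = (t - t') * (t - t')) by (rewrite <- Rabs_mult; apply Rabs_right; apply Rle_ge; apply Rle_0_sqr).
  generalize (Rabs_pos (y - y')) (Rabs_pos (t - t')). intros. nra.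
  generalize (Rabs_pos (y - y')) (Rabs_pos (t - t')). lra.
Qed.

Set Default Proof Using "All".
Section Geo.
Variables (tb : R) (g1 g2 : R -> R).
Hypothesis Htb : 0 < tb.
Hypothesis Hsign : forall t, Iopen tb t -> g1 t < 0 < g2 t.
Hypothesis Hg10 : g1 0 = 0.
Hypothesis Hg1tb : g1 tb = 0.
Hypothesis Hg20 : g2 0 = 0.
Hypothesis Hg2tb : g2 tb = 0.
Hypothesis Hc1 : cont_on (Iclosed tb) g1.
Hypothesis Hc2 : cont_on (Iclosed tb) g2.
Let D := domD tb g1 g2.

Lemma cl_corner s : (s = 0 \/ s = tb) -> closureW D 0 s.
Proof.
  intros Hs eps He. set (e := Rmin (eps/2) (tb/2)).
  assert (0 < e) by (unfold e; apply Rmin_pos; lra).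
  assert (e <= eps/2) by (unfold e; apply Rmin_l). assert (e <= tb/2) by (unfold e; apply Rmin_r).
  destruct Hs as [->| ->].
  - exists 0, e. split. split. unfold Iopen; lra. apply Hsign. unfold Iopen; lra.
    eapply Rle_lt_trans. apply distW_le. replace (0 - 0) with 0 by ring. rewrite Rabs_R0. split_Rabs; lra.
  - exists 0, (tb - e). split. split. unfold Iopen; lra. apply Hsign. unfold Iopen; lra.
    eapply Rle_lt_trans. apply distW_le. replace (0 - 0) with 0 by ring. rewrite Rabs_R0. split_Rabs; lra.
Qed.

Lemma bd_g1 s : Iclosed tb s -> bdryW D (g1 s) s.
Proof.
  intros Hs. split.
  - destruct (Req_dec s 0) as [E|E]; [subst; rewrite Hg10; apply cl_corner; auto|].
    destruct (Req_dec s tb) as [E'|E']; [subst; rewrite Hg1tb; apply cl_corner; auto|].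
    assert (Os : Iopen tb s) by (unfold Iopen, Iclosed in *; lra).
    intros eps He. generalize (Hsign s Os). intros [h1 h2].
    set (e := Rmin (eps/2) ((g2 s - g1 s)/2)).
    assert (0 < e) by (unfold e; apply Rmin_pos; lra).
    assert (e <= eps/2) by (unfold e; apply Rmin_l). assert (e <= (g2 s - g1 s)/2) by (unfold e; apply Rmin_r).
    exists (g1 s + e), s. split. split; auto. lra.
    eapply Rle_lt_trans. apply distW_le. replace (s - s) with 0 by ring. rewrite Rabs_R0. split_Rabs; lra.
  - intros eps He. exists (g1 s - eps/2), s. split.
    + intros [_ [h _]]. lra.
    + eapply Rle_lt_trans. apply distW_le. replace (s - s) with 0 by ring. rewrite Rabs_R0. split_Rabs; lra.
Qed.

Lemma bd_g2 s : Iclosed tb s -> bdryW D (g2 s) s.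
Proof.
  intros Hs. split.
  - destruct (Req_dec s 0) as [E|E]; [subst; rewrite Hg20; apply cl_corner; auto|].
    destruct (Req_dec s tb) as [E'|E']; [subst; rewrite Hg2tb; apply cl_corner; auto|].
    assert (Os : Iopen tb s) by (unfold Iopen, Iclosed in *; lra).
    intros eps He. generalize (Hsign s Os). intros [h1 h2].
    set (e := Rmin (eps/2) ((g2 s - g1 s)/2)).
    assert (0 < e) by (unfold e; apply Rmin_pos; lra).
    assert (e <= eps/2) by (unfold e; apply Rmin_l). assert (e <= (g2 s - g1 s)/2) by (unfold e; apply Rmin_r).
    exists (g2 s - e), s. split. split; auto. lra.
    eapply Rle_lt_trans. apply distW_le. replace (s - s) with 0 by ring. rewrite Rabs_R0. split_Rabs; lra.
  - intros eps He. exists (g2 s + eps/2), s. split.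
    + intros [_ [_ h]]. lra.
    + eapply Rle_lt_trans. apply distW_le. replace (s - s) with 0 by ring. rewrite Rabs_R0. split_Rabs; lra.
Qed.

Lemma closure_char y t : closureW D y t -> Iclosed tb t /\ g1 t <= y <= g2 t.
Proof.
  intros Hc.
  assert (Ht : Iclosed tb t).
  { split.
    - destruct (Rle_dec 0 t) as [h|h]; auto. exfalso.
      destruct (Hc (- t) ltac:(lra)) as [y' [t' [[Ht' _] Hd]]]. generalize (distW_ge y t y' t'). intros [_ k].
      unfold Iopen in Ht'. split_Rabs; lra.
    - destruct (Rle_dec t tb) as [h|h]; auto. exfalso.
      destruct (Hc (t - tb) ltac:(lra)) as [y' [t' [[Ht' _] Hd]]]. generalize (distW_ge y t y' t'). intros [_ k].
      unfold Iopen in Ht'. split_Rabs; lra. }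
  split; auto. split.
  - destruct (Rle_dec (g1 t) y) as [h|h]; auto. exfalso.
    set (e0 := (g1 t - y) / 2).
    destruct (Hc1 t Ht e0 ltac:(unfold e0; lra)) as [d [Hd Hd']].
    destruct (Hc (Rmin d e0) ltac:(apply Rmin_pos; unfold e0 in *; lra)) as [y' [t' [[Ht' [Hy1 _]] Hdist]]].
    generalize (distW_ge y t y' t') (Rmin_l d e0) (Rmin_r d e0). intros [k1 k2] m1 m2.
    assert (Iclosed tb t') by (unfold Iopen, Iclosed in *; lra).
    generalize (Hd' t' H ltac:(rewrite Rabs_minus_sym; lra)). unfold e0 in *. split_Rabs; lra.
  - destruct (Rle_dec y (g2 t)) as [h|h]; auto. exfalso.
    set (e0 := (y - g2 t) / 2).
    destruct (Hc2 t Ht e0 ltac:(unfold e0; lra)) as [d [Hd Hd']].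
    destruct (Hc (Rmin d e0) ltac:(apply Rmin_pos; unfold e0 in *; lra)) as [y' [t' [[Ht' [_ Hy2]] Hdist]]].
    generalize (distW_ge y t y' t') (Rmin_l d e0) (Rmin_r d e0). intros [k1 k2] m1 m2.
    assert (Iclosed tb t') by (unfold Iopen, Iclosed in *; lra).
    generalize (Hd' t' H ltac:(rewrite Rabs_minus_sym; lra)). unfold e0 in *. split_Rabs; lra.
Qed.

Lemma D_open y t : D y t -> ~ closureW (fun y' t' => ~ D y' t') y t.
Proof.
  intros [Ht [Hy1 Hy2]] Hc. unfold Iopen in Ht.
  set (e0 := Rmin (y - g1 t) (g2 t - y) / 2).
  assert (e0p : 0 < e0) by (unfold e0; generalize (Rmin_pos (y - g1 t) (g2 t - y)); lra).
  assert (e1 : e0 <= (y - g1 t) / 2) by (unfold e0; generalize (Rmin_l (y - g1 t) (g2 t - y)); lra).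
  assert (e2 : e0 <= (g2 t - y) / 2) by (unfold e0; generalize (Rmin_r (y - g1 t) (g2 t - y)); lra).
  assert (Ct : Iclosed tb t) by (unfold Iclosed; lra).
  destruct (Hc1 t Ct e0 e0p) as [d1 [Hd1 Hd1']].
  destruct (Hc2 t Ct e0 e0p) as [d2 [Hd2 Hd2']].
  set (eta := Rmin (Rmin d1 d2) (Rmin e0 (Rmin t (tb - t)))).
  assert (etap : 0 < eta) by (unfold eta; repeat apply Rmin_pos; lra).
  generalize (Rmin_l (Rmin d1 d2) (Rmin e0 (Rmin t (tb - t)))) (Rmin_r (Rmin d1 d2) (Rmin e0 (Rmin t (tb - t))))
    (Rmin_l d1 d2) (Rmin_r d1 d2) (Rmin_l e0 (Rmin t (tb - t))) (Rmin_r e0 (Rmin t (tb - t))) (Rmin_l t (tb - t)) (Rmin_r t (tb - t)).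
  fold eta. intros.
  destruct (Hc eta etap) as [y' [t' [HnD Hd]]].
  generalize (distW_ge y t y' t'). intros [k1 k2].
  apply HnD. assert (Iopen tb t') by (unfold Iopen; split_Rabs; lra).
  assert (Ct' : Iclosed tb t') by (unfold Iopen, Iclosed in *; lra).
  generalize (Hd1' t' Ct' ltac:(rewrite Rabs_minus_sym; lra)) (Hd2' t' Ct' ltac:(rewrite Rabs_minus_sym; lra)). intros.
  split; auto. split; split_Rabs; lra.
Qed.

Lemma bdry_class y t : bdryW D y t ->
  (y = 0 /\ t = 0) \/ (y = 0 /\ t = tb) \/ (Iopen tb t /\ (y = g1 t \/ y = g2 t)).
Proof.
  intros [Hc Hn]. destruct (closure_char y t Hc) as [Ht [Hy1 Hy2]].
  destruct (Req_dec t 0) as [E|E]. { subst. rewrite Hg10, Hg20 in *. left; split; lra. }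
  destruct (Req_dec t tb) as [E'|E']. { subst. rewrite Hg1tb, Hg2tb in *. right; left; split; lra. }
  right; right. assert (Ot : Iopen tb t) by (unfold Iopen, Iclosed in *; lra). split; auto.
  destruct (Req_dec y (g1 t)); auto. destruct (Req_dec y (g2 t)); auto.
  exfalso. apply (D_open y t); auto. split; auto. lra.
Qed.

End Geo.

Lemma alg1 A B P Q s l h y : B - A <> 0 -> l = s - 2 * (B - A) * (P + Q) -> y = (1 - h) * A + h * B ->
  P + (y - A) * (Q - P) / (B - A) = (1 - h) * P + h * Q /\
  (s - 2 * ff (y - A) (B - y) P Q) + 2 * y * (P + (y - A) * (Q - P) / (B - A)) =
    (1 - h) * (s + 2 * A * P) + h * (l + 2 * B * Q).
Proof.
  intros Hd Hl Hy. subst y l. unfold ff, fH. split.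
  - field; auto.
  - replace ((1 - h) * A + h * B - A + (B - ((1 - h) * A + h * B))) with (B - A) by ring. field; auto.
Qed.

Definition approx tb (f : R -> R) e := forall eps, 0 < eps -> exists s, Iopen tb s /\ Rabs (s - e) < eps /\ Rabs (f s - f e) < eps.

Lemma approx_of_cont tb f e : 0 < tb -> (e = 0 \/ e = tb) ->
  (forall eps, 0 < eps -> exists d, 0 < d /\ forall s, Iclosed tb s -> Rabs (s - e) < d -> Rabs (f s - f e) < eps) ->
  approx tb f e.
Proof.
  intros Htb He Hc eps Heps. destruct (Hc eps Heps) as [d [Hd Hd']].
  set (m := Rmin (Rmin d eps) tb / 2).
  assert (m0 : 0 < m) by (unfold m; generalize (Rmin_pos (Rmin d eps) tb (Rmin_pos d eps Hd Heps) Htb); lra).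
  assert (m1 : m <= d / 2) by (unfold m; generalize (Rmin_l (Rmin d eps) tb) (Rmin_l d eps); lra).
  assert (m2 : m <= eps / 2) by (unfold m; generalize (Rmin_l (Rmin d eps) tb) (Rmin_r d eps); lra).
  assert (m3 : m <= tb / 2) by (unfold m; generalize (Rmin_r (Rmin d eps) tb); lra).
  destruct He as [-> | ->].
  - exists m. split. unfold Iopen; lra. split. rewrite Rminus_0_r, Rabs_right; lra.
    apply Hd'. unfold Iclosed; lra. rewrite Rminus_0_r, Rabs_right; lra.
  - exists (tb - m). split. unfold Iopen; lra. split. rewrite Rabs_left; lra.
    apply Hd'. unfold Iclosed; lra. rewrite Rabs_left; lra.
Qed.

Lemma near_closed tb f s : approx tb f 0 -> approx tb f tb -> Iclosed tb s ->
  forall eps, 0 < eps -> exists s', Iopen tb s' /\ Rabs (s' - s) < eps /\ Rabs (f s' - f s) < eps.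
Proof.
  intros H0 H1 Hs eps He.
  destruct (Req_dec s 0) as [->|E]; [apply H0; auto|].
  destruct (Req_dec s tb) as [->|E']; [apply H1; auto|].
  exists s. unfold Iopen, Iclosed in *. split; [lra|]. replace (s - s) with 0 by ring.
  replace (f s - f s) with 0 by ring. rewrite Rabs_R0. lra.
Qed.

Lemma ext_lip tb f L : 0 <= L -> (forall s t, Iopen tb s -> Iopen tb t -> Rabs (f s - f t) <= L * Rabs (s - t)) ->
  approx tb f 0 -> approx tb f tb ->
  forall s t, Iclosed tb s -> Iclosed tb t -> Rabs (f s - f t) <= L * Rabs (s - t).
Proof.
  intros HL Hl H0 H1 s t Hs Ht. apply le_eps with (2 + 2 * L). lra.
  intros e He.
  destruct (near_closed tb f s H0 H1 Hs e He) as [s' [Os [k1 k2]]].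
  destruct (near_closed tb f t H0 H1 Ht e He) as [t' [Ot [k3 k4]]].
  generalize (Hl s' t' Os Ot). intros k5.
  assert (Rabs (s' - t') <= Rabs (s - t) + 2 * e) by (revert k1 k3; split_Rabs; lra).
  assert (L * Rabs (s' - t') <= L * (Rabs (s - t) + 2 * e)) by (apply Rmult_le_compat_l; auto).
  generalize (tri3 (f s) (f s') (f t') (f t)). intros k6.
  rewrite (Rabs_minus_sym (f s) (f s')) in k6. lra.
Qed.

Lemma ext_bound tb f G : (forall t, Iopen tb t -> Rabs (f t) <= G) -> approx tb f 0 -> approx tb f tb ->
  forall t, Iclosed tb t -> Rabs (f t) <= G.
Proof.
  intros Hb H0 H1 t Ht. apply le_eps with 1. lra. intros e He.
  destruct (near_closed tb f t H0 H1 Ht e He) as [t' [Ot [k1 k2]]].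
  generalize (Hb t' Ot) (Rabs_triang_inv (f t) (f t')). intros q1 q2. rewrite (Rabs_minus_sym (f t)) in q2. lra.
Qed.

Lemma cont_end tb g e : cont_on (Iclosed tb) g -> Iclosed tb e ->
  forall eps, 0 < eps -> exists d, 0 < d /\ forall s, Iclosed tb s -> Rabs (s - e) < d -> Rabs (g s - g e) < eps.
Proof. intros Hc He. apply Hc; auto. Qed.

Lemma cont_phi_end tb g1 g2 (phi : R -> R -> R) (g : R -> R) e :
  (forall s, Iclosed tb s -> bdryW (domD tb g1 g2) (g s) s) ->
  cont_on (Iclosed tb) g -> Iclosed tb e ->
  (forall y t, bdryW (domD tb g1 g2) y t ->
     forall eps, 0 < eps -> exists delta, 0 < delta /\
       forall y' t', bdryW (domD tb g1 g2) y' t' -> distW y t y' t' < delta ->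
         Rabs (phi y' t' - phi y t) < eps) ->
  forall eps, 0 < eps -> exists d, 0 < d /\ forall s, Iclosed tb s -> Rabs (s - e) < d ->
    Rabs (phi_i phi g s - phi_i phi g e) < eps.
Proof.
  intros Hbd Hc He Hphi eps Heps.
  destruct (Hphi (g e) e (Hbd e He) eps Heps) as [dp [Hdp Hdp']].
  destruct (Hc e He (dp/2) ltac:(lra)) as [d1 [Hd1 Hd1']].
  exists (Rmin d1 (dp/2)). split. apply Rmin_pos; lra.
  intros s Hs Hse. generalize (Rmin_l d1 (dp/2)) (Rmin_r d1 (dp/2)). intros m1 m2.
  unfold phi_i. apply Hdp'. apply Hbd; auto.
  eapply Rle_lt_trans. apply distW_le.
  generalize (Hd1' s Hs ltac:(lra)). intros. rewrite (Rabs_minus_sym (g e)), (Rabs_minus_sym e). lra.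
Qed.

Theorem theorem3p1 (tb : R) (g1 g2 : R -> R) (phi : R -> R -> R) :
  0 < tb ->
  lip_on (Iopen tb) g1 -> lip_on (Iopen tb) g2 ->
  cont_on (Iclosed tb) g1 -> cont_on (Iclosed tb) g2 ->
  (forall t, Iopen tb t -> g1 t < 0 < g2 t) ->
  g1 0 = 0 -> g1 tb = 0 -> g2 0 = 0 -> g2 tb = 0 ->
  convex_on (Iopen tb) g1 -> concave_on (Iopen tb) g2 ->
  (* phi : boundary of D -> R is continuous *)
  (forall y t, bdryW (domD tb g1 g2) y t ->
     forall eps, 0 < eps -> exists delta, 0 < delta /\
       forall y' t', bdryW (domD tb g1 g2) y' t' -> distW y t y' t' < delta ->
         Rabs (phi y' t' - phi y t) < eps) ->
  lip_on (Iopen tb) (phi_i phi g1) -> lip_on (Iopen tb) (phi_i phi g2) ->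
  zeta tb g1 g2 phi < (sqrt 129 - 11) / 4 ->
  exists u : R -> R -> R,
    (forall p : pt3, R_phi tb g1 g2 phi p <-> S_u tb g1 g2 u p) /\
    (exists L : R, forall y t y' t',
        closureW (domD tb g1 g2) y t -> closureW (domD tb g1 g2) y' t' ->
        Rabs (u y t - u y' t') <= L * distW y t y' t') /\
    (forall y t, bdryW (domD tb g1 g2) y t -> u y t = phi y t).
Proof.
  intros Htb Hl1 Hl2 Hc1 Hc2 Hsign Hg10 Hg1tb Hg20 Hg2tb Hconv Hconc Hphi Hpl1 Hpl2 Hzeta.
  set (p1 := phi_i phi g1). set (p2 := phi_i phi g2).
  destruct (lipI_ok tb g1 Htb Hl1) as [lg1n lg1].
  destruct (lipI_ok tb g2 Htb Hl2) as [lg2n lg2].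
  destruct (lipI_ok tb p1 Htb Hpl1) as [lp1n lp1].
  destruct (lipI_ok tb p2 Htb Hpl2) as [lp2n lp2].
  destruct (supI_ok tb g1 Htb Hl1) as [sg1n sg1].
  destruct (supI_ok tb g2 Htb Hl2) as [sg2n sg2].
  destruct (supI_ok tb p1 Htb Hpl1) as [sp1n sp1].
  destruct (supI_ok tb p2 Htb Hpl2) as [sp2n sp2].
  set (G := Rmax (supI tb g1) (supI tb g2)).
  set (Lg := Rmax (lipI tb g1) (lipI tb g2)).
  set (M := Rmax (supI tb p1) (supI tb p2)).
  set (Lp := Rmax (lipI tb p1) (lipI tb p2)).
  assert (HG : 0 <= G) by (unfold G; eapply Rle_trans; [|apply Rmax_l]; auto).
  assert (HLg : 0 <= Lg) by (unfold Lg; eapply Rle_trans; [|apply Rmax_l]; auto).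
  assert (HM : 0 <= M) by (unfold M; eapply Rle_trans; [|apply Rmax_l]; auto).
  assert (HLp : 0 <= Lp) by (unfold Lp; eapply Rle_trans; [|apply Rmax_l]; auto).
  generalize (Rmax_l (supI tb g1) (supI tb g2)) (Rmax_r (supI tb g1) (supI tb g2))
    (Rmax_l (lipI tb g1) (lipI tb g2)) (Rmax_r (lipI tb g1) (lipI tb g2))
    (Rmax_l (supI tb p1) (supI tb p2)) (Rmax_r (supI tb p1) (supI tb p2))
    (Rmax_l (lipI tb p1) (lipI tb p2)) (Rmax_r (lipI tb p1) (lipI tb p2)).
  fold G Lg M Lp. intros mx1 mx2 mx3 mx4 mx5 mx6 mx7 mx8.
  assert (C0 : Iclosed tb 0) by (unfold Iclosed; lra).
  assert (Ctb : Iclosed tb tb) by (unfold Iclosed; lra).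
  assert (bd1 : forall s, Iclosed tb s -> bdryW (domD tb g1 g2) (g1 s) s) by (intros; apply bd_g1; auto).
  assert (bd2 : forall s, Iclosed tb s -> bdryW (domD tb g1 g2) (g2 s) s) by (intros; apply bd_g2; auto).
  assert (ag10 : approx tb g1 0) by (apply approx_of_cont; auto; apply cont_end; auto).
  assert (ag1tb : approx tb g1 tb) by (apply approx_of_cont; auto; apply cont_end; auto).
  assert (ag20 : approx tb g2 0) by (apply approx_of_cont; auto; apply cont_end; auto).
  assert (ag2tb : approx tb g2 tb) by (apply approx_of_cont; auto; apply cont_end; auto).
  assert (ap10 : approx tb p1 0) by (apply approx_of_cont; auto; apply (cont_phi_end tb g1 g2 phi g1); auto).
  assert (ap1tb : approx tb p1 tb) by (apply approx_of_cont; auto; apply (cont_phi_end tb g1 g2 phi g1); auto).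
  assert (ap20 : approx tb p2 0) by (apply approx_of_cont; auto; apply (cont_phi_end tb g1 g2 phi g2); auto).
  assert (ap2tb : approx tb p2 tb) by (apply approx_of_cont; auto; apply (cont_phi_end tb g1 g2 phi g2); auto).
  assert (Hg1b : forall s, 0 <= s <= tb -> Rabs (g1 s) <= G).
  { apply ext_bound; auto. intros t Ht. generalize (sg1 t Ht). lra. }
  assert (Hg2b : forall s, 0 <= s <= tb -> Rabs (g2 s) <= G).
  { apply ext_bound; auto. intros t Ht. generalize (sg2 t Ht). lra. }
  assert (Hp1b : forall s, 0 <= s <= tb -> Rabs (p1 s) <= M).
  { apply ext_bound; auto. intros t Ht. generalize (sp1 t Ht). lra. }
  assert (Hp2b : forall s, 0 <= s <= tb -> Rabs (p2 s) <= M).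
  { apply ext_bound; auto. intros t Ht. generalize (sp2 t Ht). lra. }
  assert (Hg1l : forall s t, 0 <= s <= tb -> 0 <= t <= tb -> Rabs (g1 s - g1 t) <= Lg * Rabs (s - t)).
  { apply ext_lip; auto. intros s t Hs Ht. eapply Rle_trans. apply lg1. auto. auto.
    apply Rmult_le_compat_r. apply Rabs_pos. auto. }
  assert (Hg2l : forall s t, 0 <= s <= tb -> 0 <= t <= tb -> Rabs (g2 s - g2 t) <= Lg * Rabs (s - t)).
  { apply ext_lip; auto. intros s t Hs Ht. eapply Rle_trans. apply lg2. auto. auto.
    apply Rmult_le_compat_r. apply Rabs_pos. auto. }
  assert (Hp1l : forall s t, 0 <= s <= tb -> 0 <= t <= tb -> Rabs (p1 s - p1 t) <= Lp * Rabs (s - t)).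
  { apply ext_lip; auto. intros s t Hs Ht. eapply Rle_trans. apply lp1. auto. auto.
    apply Rmult_le_compat_r. apply Rabs_pos. auto. }
  assert (Hp2l : forall s t, 0 <= s <= tb -> 0 <= t <= tb -> Rabs (p2 s - p2 t) <= Lp * Rabs (s - t)).
  { apply ext_lip; auto. intros s t Hs Ht. eapply Rle_trans. apply lp2. auto. auto.
    apply Rmult_le_compat_r. apply Rabs_pos. auto. }
  assert (Hp0 : p1 0 = p2 0) by (unfold p1, p2, phi_i; rewrite Hg10, Hg20; auto).
  assert (Hptb : p1 tb = p2 tb) by (unfold p1, p2, phi_i; rewrite Hg1tb, Hg2tb; auto).
  set (z := zeta tb g1 g2 phi).
  assert (zdef : z = 4 * (G + Lg) * (M + Lp)) by reflexivity.
  assert (Hz : 4 * (M * Lg + G * Lp) <= z).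
  { rewrite zdef. assert (0 <= G * M) by (apply Rmult_le_pos; auto).
    assert (0 <= Lg * Lp) by (apply Rmult_le_pos; auto). nra. }
  assert (Hz1 : z <= 1/10).
  { assert (sqrt 129 <= 114/10).
    { rewrite <- (sqrt_pow2 (114/10)) by lra. apply sqrt_le_1_alt. lra. }
    unfold z. lra. }
  pose proof (surj_D tb g1 g2 p1 p2 G Lg M Lp z Htb HG HLg HM HLp Hz Hz1 Hg1b Hg2b Hp1b Hp2b Hg1l Hg2l Hp1l Hp2l Hg10 Hg1tb Hg20 Hg2tb Hp0 Hptb Hsign Hconv Hconc) as X_surj_D.
  pose proof (char_in_D tb g1 g2 p1 p2 G Lg M Lp z Htb HG HLg HM HLp Hz Hz1 Hg1b Hg2b Hp1b Hp2b Hg1l Hg2l Hp1l Hp2l Hg10 Hg1tb Hg20 Hg2tb Hp0 Hptb Hsign Hconv Hconc) as X_char_in_D.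
  pose proof (T_inj tb g1 g2 p1 p2 G Lg M Lp z Htb HG HLg HM HLp Hz Hz1 Hg1b Hg2b Hp1b Hp2b Hg1l Hg2l Hp1l Hp2l Hg10 Hg1tb Hg20 Hg2tb Hp0 Hptb Hsign Hconv Hconc) as X_T_inj.
  pose proof (T_atA tb g1 g2 p1 p2 G Lg M Lp z Htb HG HLg HM HLp Hz Hz1 Hg1b Hg2b Hp1b Hp2b Hg1l Hg2l Hp1l Hp2l Hg10 Hg1tb Hg20 Hg2tb Hp0 Hptb Hsign Hconv Hconc) as X_T_atA.
  pose proof (T_atB tb g1 g2 p1 p2 G Lg M Lp z Htb HG HLg HM HLp Hz Hz1 Hg1b Hg2b Hp1b Hp2b Hg1l Hg2l Hp1l Hp2l Hg10 Hg1tb Hg20 Hg2tb Hp0 Hptb Hsign Hconv Hconc) as X_T_atB.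
  pose proof (lam_unique tb g1 g2 p1 p2 G Lg M Lp z Htb HG HLg HM HLp Hz Hz1 Hg1b Hg2b Hp1b Hp2b Hg1l Hg2l Hp1l Hp2l Hg10 Hg1tb Hg20 Hg2tb Hp0 Hptb Hsign Hconv Hconc) as X_lam_unique.
  pose proof (lam_spec tb g1 g2 p1 p2 G Lg M Lp z Htb HG HLg HM HLp Hz Hz1 Hg1b Hg2b Hp1b Hp2b Hg1l Hg2l Hp1l Hp2l Hg10 Hg1tb Hg20 Hg2tb Hp0 Hptb Hsign Hconv Hconc) as X_lam_spec.
  pose proof (lam_eq tb g1 g2 p1 p2 G Lg M Lp z Htb HG HLg HM HLp Hz Hz1 Hg1b Hg2b Hp1b Hp2b Hg1l Hg2l Hp1l Hp2l Hg10 Hg1tb Hg20 Hg2tb Hp0 Hptb Hsign Hconv Hconc) as X_lam_eq.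
  pose proof (lam_op tb g1 g2 p1 p2 G Lg M Lp z Htb HG HLg HM HLp Hz Hz1 Hg1b Hg2b Hp1b Hp2b Hg1l Hg2l Hp1l Hp2l Hg10 Hg1tb Hg20 Hg2tb Hp0 Hptb Hsign Hconv Hconc) as X_lam_op.
  pose proof (lam_inv_op tb g1 g2 p1 p2 G Lg M Lp z Htb HG HLg HM HLp Hz Hz1 Hg1b Hg2b Hp1b Hp2b Hg1l Hg2l Hp1l Hp2l Hg10 Hg1tb Hg20 Hg2tb Hp0 Hptb Hsign Hconv Hconc) as X_lam_inv_op.
  pose proof (AB_op tb g1 g2 p1 p2 G Lg M Lp z Htb HG HLg HM HLp Hz Hz1 Hg1b Hg2b Hp1b Hp2b Hg1l Hg2l Hp1l Hp2l Hg10 Hg1tb Hg20 Hg2tb Hp0 Hptb Hsign Hconv Hconc) as X_AB_op.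
  pose proof (T0_bounds tb g1 g2 p1 p2 G Lg M Lp z Htb HG HLg HM HLp Hz Hz1 Hg1b Hg2b Hp1b Hp2b Hg1l Hg2l Hp1l Hp2l Hg10 Hg1tb Hg20 Hg2tb Hp0 Hptb Hsign Hconv Hconc) as X_T0_bounds.
  pose proof (U_lip tb g1 g2 p1 p2 G Lg M Lp z Htb HG HLg HM HLp Hz Hz1 Hg1b Hg2b Hp1b Hp2b Hg1l Hg2l Hp1l Hp2l Hg10 Hg1tb Hg20 Hg2tb Hp0 Hptb Hsign Hconv Hconc) as X_U_lip.
  pose proof (corner0 tb g1 g2 p1 p2 G Lg M Lp z Htb HG HLg HM HLp Hz Hz1 Hg1b Hg2b Hp1b Hp2b Hg1l Hg2l Hp1l Hp2l Hg10 Hg1tb Hg20 Hg2tb Hp0 Hptb Hsign Hconv Hconc) as X_corner0.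
  pose proof (cornertb tb g1 g2 p1 p2 G Lg M Lp z Htb HG HLg HM HLp Hz Hz1 Hg1b Hg2b Hp1b Hp2b Hg1l Hg2l Hp1l Hp2l Hg10 Hg1tb Hg20 Hg2tb Hp0 Hptb Hsign Hconv Hconc) as X_cornertb.
  pose proof (K_nonneg tb g1 g2 p1 p2 G Lg M Lp z Htb HG HLg HM HLp Hz Hz1 Hg1b Hg2b Hp1b Hp2b Hg1l Hg2l Hp1l Hp2l Hg10 Hg1tb Hg20 Hg2tb Hp0 Hptb Hsign Hconv Hconc) as X_K_nonneg.
  pose proof (CU_nonneg tb g1 g2 p1 p2 G Lg M Lp z Htb HG HLg HM HLp Hz Hz1 Hg1b Hg2b Hp1b Hp2b Hg1l Hg2l Hp1l Hp2l Hg10 Hg1tb Hg20 Hg2tb Hp0 Hptb Hsign Hconv Hconc) as X_CU_nonneg.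
  unfold adm, A, B, P, Q in *.
  set (lm := lam tb g1 g2 p1 p2) in *.
  set (TT := T tb g1 g2 p1 p2) in *.
  set (UU := U tb g1 g2 p1 p2) in *.
  set (Wit := fun y t s => Iopen tb s /\ g1 s <= y <= g2 (lm s) /\ TT s y = t).
  set (u := fun y t => match excluded_middle_informative (exists s, Wit y t s) with
                       | left _ => UU (epsilon (inhabits 0) (Wit y t)) y | right _ => phi y t end).
  assert (u_wit : forall y t s, Wit y t s -> u y t = UU s y).
  { intros y t s Hw. unfold u. destruct (excluded_middle_informative _) as [h|h].
    - assert (Hw' : Wit y t (epsilon (inhabits 0) (Wit y t))) by (apply epsilon_spec; auto).
      f_equal. destruct Hw as [o1 [a1 e1]]. destruct Hw' as [o2 [a2 e2]].
      apply (X_T_inj _ _ y o2 o1 a2 a1). congruence.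
    - exfalso; apply h; exists s; auto. }
  assert (u_nowit : forall y t, ~ (exists s, Wit y t s) -> u y t = phi y t).
  { intros y t h. unfold u. destruct (excluded_middle_informative _) as [h'|h']; tauto. }
  assert (UA : forall s, Iopen tb s -> UU s (g1 s) = p1 s).
  { intros s Hs. generalize (X_AB_op s Hs). intros. unfold UU, U, A, B, P, Q. fold lm. field. lra. }
  assert (UB : forall s, Iopen tb s -> UU s (g2 (lm s)) = p2 (lm s)).
  { intros s Hs. generalize (X_AB_op s Hs). intros. unfold UU, U, A, B, P, Q. fold lm. field. lra. }
  assert (nw0 : ~ exists s, Wit 0 0 s).
  { intros [s [Hs [_ Ht]]]. destruct (X_T0_bounds s Hs) as [_ [[k _] _]]. unfold Iopen in Hs. fold TT in k. lra. }
  assert (nwtb : ~ exists s, Wit 0 tb s).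
  { intros [s [Hs [_ Ht]]]. destruct (X_T0_bounds s Hs) as [_ [_ [_ k]]]. generalize (X_lam_op s Hs).
    unfold Iopen in Hs. fold TT lm in k. intros. lra. }
  assert (cl_class : forall y t, closureW (domD tb g1 g2) y t ->
     (y = 0 /\ t = 0) \/ (y = 0 /\ t = tb) \/ exists s, Wit y t s).
  { intros y t Hc. destruct (closure_char tb g1 g2 Htb Hsign Hg10 Hg1tb Hg20 Hg2tb Hc1 Hc2 y t Hc) as [Ht [Hy1 Hy2]].
    destruct (Req_dec t 0) as [E|E]. { subst. rewrite Hg10, Hg20 in *. left; split; lra. }
    destruct (Req_dec t tb) as [E'|E']. { subst. rewrite Hg1tb, Hg2tb in *. right; left; split; lra. }
    right; right. assert (Ot : Iopen tb t) by (unfold Iopen, Iclosed in *; lra).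
    destruct (Req_dec y (g1 t)) as [e1|e1].
    { exists t. split; auto. generalize (X_AB_op t Ot). intros. split. lra. rewrite e1. apply X_T_atA; auto. }
    destruct (Req_dec y (g2 t)) as [e2|e2].
    { destruct (X_lam_inv_op t Ot) as [s [Os Es]]. exists s. split; auto. generalize (X_AB_op s Os). intros.
      fold lm in Es. rewrite Es in *. split. lra. rewrite e2, <- Es. apply X_T_atB; auto. }
    destruct (X_surj_D y t ltac:(split; auto; lra)) as [s [Os [Hy Es]]].
    exists s. split; auto. split; auto. lra. }
  assert (p10 : phi 0 0 = p1 0) by (unfold p1, phi_i; rewrite Hg10; auto).
  assert (p1tb : phi 0 tb = p1 tb) by (unfold p1, phi_i; rewrite Hg1tb; auto).
  assert (u00 : u 0 0 = p1 0) by (rewrite u_nowit; auto).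
  assert (u0tb : u 0 tb = p1 tb) by (rewrite u_nowit; auto).
  exists u. split; [|split].
  3: {
    intros y t Hb.
    destruct (bdry_class tb g1 g2 Htb Hsign Hg10 Hg1tb Hg20 Hg2tb Hc1 Hc2 y t Hb) as [[-> ->]|[[-> ->]|[Ot [e|e]]]].
    - rewrite u00; auto.
    - rewrite u0tb; auto.
    - rewrite (u_wit y t t). rewrite e, UA; auto.
      split; auto. generalize (X_AB_op t Ot). intros. split. lra. rewrite e. apply X_T_atA; auto.
    - destruct (X_lam_inv_op t Ot) as [s [Os Es]]. fold lm in Es.
      rewrite (u_wit y t s). rewrite e, <- Es, UB; auto.
      split; auto. generalize (X_AB_op s Os). intros. rewrite Es in *. split. lra. rewrite e, <- Es. apply X_T_atB; auto. }
  2: {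
    set (L0v := L0 tb g1 Lg M Lp).
    assert (L0n : 0 <= L0v).
    { unfold L0v, L0. generalize X_K_nonneg X_CU_nonneg. intros.
      assert (0 <= CU tb g1 Lg Lp * M) by (apply Rmult_le_pos; auto). lra. }
    exists (2 * L0v + 12 * Lp).
    intros y t y' t' H1 H2. generalize (distW_ge y t y' t'). intros [dy dt].
    set (d := distW y t y' t') in *.
    assert (dn : 0 <= d) by (generalize (Rabs_pos (y - y')); lra).
    assert (sc : forall c a, 0 <= c -> a <= d -> c * a <= c * d) by (intros; apply Rmult_le_compat_l; auto).
    assert (base : 0 <= L0v * d /\ 0 <= Lp * d) by (split; apply Rmult_le_pos; auto).
    assert (wc0 : forall s yy tt, Wit yy tt s -> Rabs (UU s yy - p1 0) <= 6 * Lp * tt).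
    { intros s yy tt [Os [Hy Ht]]. destruct (X_corner0 s yy Os Hy) as [k _]. fold TT in k. rewrite <- Ht. lra. }
    assert (wctb : forall s yy tt, Wit yy tt s -> Rabs (UU s yy - p1 tb) <= 12 * Lp * (tb - tt)).
    { intros s yy tt [Os [Hy Ht]]. destruct (X_cornertb s yy Os Hy) as [k _]. fold TT in k. rewrite <- Ht. lra. }
    assert (wt0 : forall s yy tt, Wit yy tt s -> 0 < tt < tb).
    { intros s yy tt [Os [Hy Ht]]. destruct (X_corner0 s yy Os Hy) as [_ k1]. destruct (X_cornertb s yy Os Hy) as [_ k2].
      fold TT in k1, k2. rewrite <- Ht. lra. }
    assert (cc : Rabs (p1 0 - p1 tb) <= Lp * tb).
    { generalize (Hp1l 0 tb ltac:(lra) ltac:(lra)). intros k. rewrite (Rabs_left (0 - tb)) in k by lra. lra. }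
    destruct (cl_class y t H1) as [[-> ->]|[[-> ->]|[s Ws]]];
    destruct (cl_class y' t' H2) as [[-> ->]|[[-> ->]|[s' Ws']]].
    + rewrite u00. replace (p1 0 - p1 0) with 0 by ring. rewrite Rabs_R0. lra.
    + rewrite u00, u0tb. generalize (sc Lp tb HLp). rewrite Rabs_left in dt by lra. intros. lra.
    + rewrite u00, (u_wit _ _ s' Ws'). generalize (wc0 _ _ _ Ws') (wt0 _ _ _ Ws'). intros k1 k2.
      rewrite Rabs_minus_sym. rewrite Rabs_left in dt by lra. generalize (sc (6 * Lp) t' ltac:(lra) ltac:(lra)). lra.
    + rewrite u00, u0tb. generalize (sc Lp tb HLp). rewrite Rabs_right in dt by lra. rewrite Rabs_minus_sym. intros. lra.
    + rewrite u0tb. replace (p1 tb - p1 tb) with 0 by ring. rewrite Rabs_R0. lra.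
    + rewrite u0tb, (u_wit _ _ s' Ws'). generalize (wctb _ _ _ Ws') (wt0 _ _ _ Ws'). intros k1 k2.
      rewrite Rabs_minus_sym. rewrite Rabs_right in dt by lra. generalize (sc (12 * Lp) (tb - t') ltac:(lra) ltac:(lra)). lra.
    + rewrite u00, (u_wit _ _ s Ws). generalize (wc0 _ _ _ Ws) (wt0 _ _ _ Ws). intros k1 k2.
      rewrite Rabs_right in dt by lra. generalize (sc (6 * Lp) t ltac:(lra) ltac:(lra)). lra.
    + rewrite u0tb, (u_wit _ _ s Ws). generalize (wctb _ _ _ Ws) (wt0 _ _ _ Ws). intros k1 k2.
      rewrite Rabs_left in dt by lra. generalize (sc (12 * Lp) (tb - t) ltac:(lra) ltac:(lra)). lra.
    + rewrite (u_wit _ _ s Ws), (u_wit _ _ s' Ws').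
      destruct Ws as [Os [Hy Ht]]. destruct Ws' as [Os' [Hy' Ht']].
      generalize (X_U_lip s s' y y' Os Os' Hy Hy'). fold TT UU. rewrite Ht, Ht'. intros k.
      rewrite Rabs_minus_sym. rewrite (Rabs_minus_sym y') in k. rewrite (Rabs_minus_sym t') in k.
      generalize (sc L0v _ L0n dy) (sc L0v _ L0n dt). fold L0v in k. lra. }
  intros p. split.
  - intros [h [s [l [Hh [Hs [Hl [Hhor Hp]]]]]]].
    destruct Hhor as [a [b Hab]].
    unfold p_i, vsub, vadd, vscale, Xf, Yf in Hab, Hp. fold p1 p2 in Hab, Hp.
    injection Hab as e1 e2 e3.
    assert (ea : a = p2 l - p1 s) by lra. assert (eb : b = g2 l - g1 s) by lra. subst a b.
    assert (HF : F g1 g2 p1 p2 s l = 0) by (unfold F; lra).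
    assert (Cs : 0 <= s <= tb) by (unfold Iopen in Hs; lra).
    assert (El : l = lm s) by (apply X_lam_unique; auto). subst l.
    generalize (X_AB_op s Hs). intros [hA hB].
    set (y := (1 - h) * g1 s + h * g2 (lm s)).
    assert (Hy : g1 s < y < g2 (lm s)) by (unfold y; nra).
    set (t := TT s y).
    assert (HD := X_char_in_D s y Hs Hy). fold TT in HD.
    assert (Hw : Wit y t s) by (split; auto; split; [lra|reflexivity]).
    exists y, t. split; auto. rewrite Hp. rewrite (u_wit y t s Hw).
    destruct (alg1 (g1 s) (g2 (lm s)) (p1 s) (p2 (lm s)) s (lm s) h y ltac:(lra) (X_lam_eq s Cs) eq_refl) as [q1 q2].
    assert (EU : UU s y = (1 - h) * p1 s + h * p2 (lm s)) by (unfold UU, U, A, B, P, Q; fold lm; apply q1).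
    assert (ET : t + 2 * y * UU s y = (1 - h) * (s + 2 * g1 s * p1 s) + h * (lm s + 2 * g2 (lm s) * p2 (lm s))).
    { rewrite <- q2. unfold t, TT, T, UU, U, A, B, P, Q. fold lm. reflexivity. }
    rewrite ET, EU. reflexivity.
  - intros [y [t [HD Hp]]]. destruct (X_surj_D y t HD) as [s [Os [Hy Es]]]. fold TT lm in Hy, Es.
    assert (Hw : Wit y t s) by (split; auto; split; [lra|auto]).
    rewrite (u_wit y t s Hw) in Hp.
    assert (Cs : 0 <= s <= tb) by lra.
    generalize (X_AB_op s Os). intros [hA hB].
    set (h := (y - g1 s) / (g2 (lm s) - g1 s)).
    assert (hy : y = (1 - h) * g1 s + h * g2 (lm s)) by (unfold h; field; lra).
    assert (h01 : 0 < h < 1).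
    { unfold h. split. apply Rdiv_lt_0_compat; lra.
      apply Rmult_lt_reg_r with (g2 (lm s) - g1 s); [lra|]. unfold Rdiv. rewrite Rmult_assoc, Rinv_l by lra. lra. }
    destruct (X_lam_spec s Cs) as [Cl HF]. fold lm in Cl, HF.
    exists h, s, (lm s). split; auto. split; auto. split; auto. split.
    + exists (p2 (lm s) - p1 s), (g2 (lm s) - g1 s).
      unfold p_i, vsub, vadd, vscale, Xf, Yf. fold p1 p2.
      unfold F in HF.
      apply f_equal2; [apply f_equal2|]; [ring|ring|lra].
    + rewrite Hp. unfold p_i, vsub, vadd, vscale, Xf, Yf. fold p1 p2.
      destruct (alg1 (g1 s) (g2 (lm s)) (p1 s) (p2 (lm s)) s (lm s) h y ltac:(lra) (X_lam_eq s Cs) hy) as [q1 q2].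
      apply f_equal2; [apply f_equal2|].
      * unfold UU, U, A, B, P, Q. fold lm. apply q1.
      * exact hy.
      * rewrite <- Es, <- q2. unfold TT, T, UU, U, A, B, P, Q. fold lm. reflexivity.
Qed.
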